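(* Let $(\mu_n)$ be a norm bounded sequence in $ba(\mathcal A)_+$, let $\Gamma(n)=\mathrm{co}(\mu_n,\mu_{n+1},\ldots)$ and $\lambda=\sum_n2^{-n}\mu_n$. There exist $\xi\in ba(\mathcal A,\lambda)_+$ and a sequence $(m_n)$ with $m_n\in\Gamma(n)$ for each $n$ such that, for every $k\in\mathbb N$, $\lim_n\|(\xi\wedge k\lambda)-(m_n\wedge k\lambda)\|=0$, and $\xi(A)\le\liminf_nm_n(A)$ for every $A\in\mathcal A$.
   Context: $\mathcal A$ algebra of subsets of $\Omega$; $ba(\mathcal A)$ the Banach lattice of bounded finitely additive real set functions with $\|\mu\|=|\mu|(\Omega)$, $ba(\mathcal A)_+$ its nonnegative elements and $\wedge$ the lattice infimum in $ba(\mathcal A)$. $\mathrm{co}$ denotes (finite) convex hull. $ba(\mathcal A,\lambda)_+$ is the set of nonnegative $\mu$ with $\mu\ll\lambda$, where $\mu\ll\lambda$ means for every $\varepsilon>0$ there is $\delta>0$ with $|\lambda|(A)<\delta\Rightarrow|\mu|(A)<\varepsilon$. *)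

(* Defs.v *)
From Stdlib Require Export Reals List.
Open Scope R_scope.

(* Set functions are maps (Omega -> Prop) -> R, only their
   values on members of the algebra matter. *)

Definition is_algebra {Omega : Type} (A : (Omega -> Prop) -> Prop) : Prop :=
  A (fun _ => True) /\
  (forall F, A F -> A (fun x => ~ F x)) /\
  (forall F G, A F -> A G -> A (fun x => F x \/ G x)).

Definition fin_additive {Omega : Type} (A : (Omega -> Prop) -> Prop)
  (mu : (Omega -> Prop) -> R) : Prop :=
  forall F G, A F -> A G -> (forall x, F x -> G x -> False) ->
    mu (fun x => F x \/ G x) = mu F + mu G.

Definition bounded_sf {Omega : Type} (A : (Omega -> Prop) -> Prop)
  (mu : (Omega -> Prop) -> R) : Prop :=
  exists M, forall F, A F -> Rabs (mu F) <= M.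

Definition is_ba {Omega : Type} (A : (Omega -> Prop) -> Prop)
  (mu : (Omega -> Prop) -> R) : Prop :=
  fin_additive A mu /\ bounded_sf A mu.

Definition is_ba_pos {Omega : Type} (A : (Omega -> Prop) -> Prop)
  (mu : (Omega -> Prop) -> R) : Prop :=
  is_ba A mu /\ (forall F, A F -> 0 <= mu F).

Definition is_partition {Omega : Type} (A : (Omega -> Prop) -> Prop)
  (E : Omega -> Prop) (l : list (Omega -> Prop)) : Prop :=
  (forall F, In F l -> A F) /\
  (forall i j, (i < length l)%nat -> (j < length l)%nat -> i <> j ->
     forall x, nth i l (fun _ => False) x -> nth j l (fun _ => False) x -> False) /\
  (forall x, E x <-> exists F, In F l /\ F x).

Definition sum_abs {Omega : Type} (mu : (Omega -> Prop) -> R)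
  (l : list (Omega -> Prop)) : R :=
  fold_right (fun F s => Rabs (mu F) + s) 0 l.

Definition tv_le {Omega : Type} (A : (Omega -> Prop) -> Prop)
  (mu : (Omega -> Prop) -> R) (E : Omega -> Prop) (c : R) : Prop :=
  forall l, is_partition A E l -> sum_abs mu l <= c.

Definition tv_lt {Omega : Type} (A : (Omega -> Prop) -> Prop)
  (mu : (Omega -> Prop) -> R) (E : Omega -> Prop) (d : R) : Prop :=
  exists c, c < d /\ tv_le A mu E c.

Definition norm_le {Omega : Type} (A : (Omega -> Prop) -> Prop)
  (mu : (Omega -> Prop) -> R) (c : R) : Prop :=
  tv_le A mu (fun _ => True) c.

Definition abs_cont {Omega : Type} (A : (Omega -> Prop) -> Prop)
  (mu lam : (Omega -> Prop) -> R) : Prop :=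
  forall eps, 0 < eps -> exists delta, 0 < delta /\
    forall E, A E -> tv_lt A lam E delta -> tv_lt A mu E eps.

Definition is_ba_ac_pos {Omega : Type} (A : (Omega -> Prop) -> Prop)
  (lam mu : (Omega -> Prop) -> R) : Prop :=
  is_ba_pos A mu /\ abs_cont A mu lam.

Definition le_on {Omega : Type} (A : (Omega -> Prop) -> Prop)
  (mu nu : (Omega -> Prop) -> R) : Prop :=
  forall F, A F -> mu F <= nu F.

Definition is_inf {Omega : Type} (A : (Omega -> Prop) -> Prop)
  (mu nu rho : (Omega -> Prop) -> R) : Prop :=
  is_ba A rho /\ le_on A rho mu /\ le_on A rho nu /\
  (forall tau, is_ba A tau -> le_on A tau mu -> le_on A tau nu -> le_on A tau rho).

Definition in_Gamma {Omega : Type} (A : (Omega -> Prop) -> Prop)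
  (mu : nat -> (Omega -> Prop) -> R) (n : nat) (m : (Omega -> Prop) -> R) : Prop :=
  exists (N : nat) (w : nat -> R),
    (forall i, 0 <= w i) /\ sum_f_R0 w N = 1 /\
    (forall F, A F -> m F = sum_f_R0 (fun i => w i * mu (n + i)%nat F) N).

Definition scale_sf {Omega : Type} (k : nat) (lam : (Omega -> Prop) -> R) :
  (Omega -> Prop) -> R := fun F => INR k * lam F.

(* Main.v *)
Require Import Defs.
From Stdlib Require Import Reals Lra Lia Psatz Classical ClassicalEpsilon FunctionalExtensionality PropExtensionality List.
Open Scope R_scope.


Lemma pe {T : Type} (P Q : T -> Prop) : (forall x, P x <-> Q x) -> P = Q.
Proof. intro H; apply functional_extensionality; intro x; apply propositional_extensionality; auto. Qed.

Definition sinter {O : Type} (E F : O -> Prop) : O -> Prop := fun x => E x /\ F x.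
Definition sdiff {O : Type} (E F : O -> Prop) : O -> Prop := fun x => E x /\ ~ F x.
Definition scompl {O : Type} (F : O -> Prop) : O -> Prop := fun x => ~ F x.
Definition sunion {O : Type} (F G : O -> Prop) : O -> Prop := fun x => F x \/ G x.
Definition sfull {O : Type} : O -> Prop := fun _ => True.
Definition sempty {O : Type} : O -> Prop := fun _ => False.


Lemma A_full {O} (A : (O -> Prop) -> Prop) : is_algebra A -> A sfull.
Proof. intros [H _]; exact H. Qed.
Lemma A_compl {O} (A : (O -> Prop) -> Prop) F : is_algebra A -> A F -> A (scompl F).
Proof. intros [_ [H _]] HF; exact (H F HF). Qed.
Lemma A_union {O} (A : (O -> Prop) -> Prop) F G : is_algebra A -> A F -> A G -> A (sunion F G).
Proof. intros [_ [_ H]] HF HG; exact (H F G HF HG). Qed.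
Lemma A_inter {O} (A : (O -> Prop) -> Prop) F G : is_algebra A -> A F -> A G -> A (sinter F G).
Proof.
  intros HA HF HG.
  replace (sinter F G) with (scompl (sunion (scompl F) (scompl G))).
  - apply A_compl; auto; apply A_union; auto; apply A_compl; auto.
  - apply pe; intro x; unfold scompl, sunion, sinter; tauto.
Qed.
Lemma A_diff {O} (A : (O -> Prop) -> Prop) F G : is_algebra A -> A F -> A G -> A (sdiff F G).
Proof.
  intros HA HF HG. replace (sdiff F G) with (sinter F (scompl G)).
  - apply A_inter; auto; apply A_compl; auto.
  - apply pe; intro x; unfold sdiff, sinter, scompl; tauto.
Qed.
Lemma A_empty {O} (A : (O -> Prop) -> Prop) : is_algebra A -> A sempty.
Proof.
  intros HA. replace (@sempty O) with (scompl (@sfull O)).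
  - apply A_compl; auto; apply A_full; auto.
  - apply pe; intro x; unfold scompl, sfull, sempty; tauto.
Qed.

Definition addv {O} (A : (O -> Prop) -> Prop) (mu : (O -> Prop) -> R) := fin_additive A mu.
Definition nonnegf {O} (A : (O -> Prop) -> Prop) (mu : (O -> Prop) -> R) := forall F, A F -> 0 <= mu F.

Lemma add_union {O} (A : (O -> Prop) -> Prop) mu F G :
  fin_additive A mu -> A F -> A G -> (forall x, F x -> G x -> False) ->
  mu (sunion F G) = mu F + mu G.
Proof. intros H; apply H. Qed.

Lemma add_empty {O} (A : (O -> Prop) -> Prop) mu : is_algebra A -> fin_additive A mu -> mu sempty = 0.
Proof.
  intros HA H. pose proof (H sempty sempty (A_empty A HA) (A_empty A HA) (fun x h _ => h)).
  replace (fun x : O => sempty x \/ sempty x) with (@sempty O) in H0.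
  - lra.
  - apply pe; intro x; unfold sempty; tauto.
Qed.

Lemma add_split {O} (A : (O -> Prop) -> Prop) mu E F : is_algebra A -> fin_additive A mu ->
  A E -> A F -> mu E = mu (sinter E F) + mu (sdiff E F).
Proof.
  intros HA H HE HF.
  rewrite <- (add_union A mu); auto.
  - f_equal. apply pe; intro x; unfold sunion, sinter, sdiff; tauto.
  - apply A_inter; auto.
  - apply A_diff; auto.
  - unfold sinter, sdiff; intros x [_ h1] [_ h2]; tauto.
Qed.

Lemma add_compl {O} (A : (O -> Prop) -> Prop) mu F : is_algebra A -> fin_additive A mu ->
  A F -> mu sfull = mu F + mu (scompl F).
Proof.
  intros HA H HF. rewrite (add_split A mu sfull F); auto; [|apply A_full; auto].
  f_equal; f_equal; apply pe; intro x; unfold sinter, sdiff, sfull, scompl; tauto.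
Qed.

Lemma mono {O} (A : (O -> Prop) -> Prop) mu E F : is_algebra A -> fin_additive A mu -> nonnegf A mu ->
  A E -> A F -> (forall x, F x -> E x) -> mu F <= mu E.
Proof.
  intros HA H Hn HE HF Hs. rewrite (add_split A mu E F); auto.
  replace (sinter E F) with F.
  - pose proof (Hn (sdiff E F) (A_diff A E F HA HE HF)); lra.
  - apply pe; intro x; unfold sinter; firstorder.
Qed.

Lemma add_lin {O} (A : (O -> Prop) -> Prop) (a b : R) mu nu :
  fin_additive A mu -> fin_additive A nu -> fin_additive A (fun F => a * mu F + b * nu F).
Proof. intros H1 H2 F G HF HG Hd. rewrite (H1 F G), (H2 F G); auto; ring. Qed.

Lemma add_scale {O} (A : (O -> Prop) -> Prop) (a : R) mu :
  fin_additive A mu -> fin_additive A (fun F => a * mu F).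
Proof. intros H1 F G HF HG Hd. rewrite (H1 F G); auto; ring. Qed.

Lemma add_minus {O} (A : (O -> Prop) -> Prop) mu nu :
  fin_additive A mu -> fin_additive A nu -> fin_additive A (fun F => mu F - nu F).
Proof. intros H1 H2 F G HF HG Hd. rewrite (H1 F G), (H2 F G); auto; ring. Qed.

Definition is_glb (S : R -> Prop) (m : R) :=
  (forall x, S x -> m <= x) /\ (forall y, (forall x, S x -> y <= x) -> y <= m).
Lemma glb_or S : exists m, is_glb S m \/ ~ (exists m', is_glb S m').
Proof.
  destruct (classic (exists m', is_glb S m')) as [[m H]|H].
  - exists m; auto.
  - exists 0; auto.
Qed.
Definition glbR (S : R -> Prop) : R := proj1_sig (constructive_indefinite_description _ (glb_or S)).
Lemma glbR_spec S : (exists m, is_glb S m) -> is_glb S (glbR S).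
Proof.
  intro H. unfold glbR. destruct (constructive_indefinite_description _ (glb_or S)) as [m [Hm|Hm]]; simpl; auto.
  contradiction.
Qed.
Lemma glb_exists S b : (exists x, S x) -> (forall x, S x -> b <= x) -> exists m, is_glb S m.
Proof.
  intros [x0 H0] Hb.
  assert (Hbd : bound (fun y => S (- y))). { exists (- b). intros y Hy. apply Hb in Hy. lra. }
  assert (Hne : exists y, S (- y)). { exists (- x0). rewrite Ropp_involutive. auto. }
  destruct (completeness _ Hbd Hne) as [l [Hl1 Hl2]].
  exists (- l). split.
  - intros x Hx. assert (- x <= l). { apply Hl1. rewrite Ropp_involutive; auto. } lra.
  - intros y Hy. assert (l <= - y). { apply Hl2. intros z Hz. apply Hy in Hz. lra. } lra.
Qed.

Definition is_lubR (S : R -> Prop) (m : R) :=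
  (forall x, S x -> x <= m) /\ (forall y, (forall x, S x -> x <= y) -> m <= y).
Lemma lub_or S : exists m, is_lubR S m \/ ~ (exists m', is_lubR S m').
Proof.
  destruct (classic (exists m', is_lubR S m')) as [[m H]|H].
  - exists m; auto.
  - exists 0; auto.
Qed.
Definition lubR (S : R -> Prop) : R := proj1_sig (constructive_indefinite_description _ (lub_or S)).
Lemma lubR_spec S : (exists m, is_lubR S m) -> is_lubR S (lubR S).
Proof.
  intro H. unfold lubR. destruct (constructive_indefinite_description _ (lub_or S)) as [m [Hm|Hm]]; simpl; auto.
  contradiction.
Qed.
Lemma lub_exists S b : (exists x, S x) -> (forall x, S x -> x <= b) -> exists m, is_lubR S m.
Proof.
  intros Hne Hb.
  assert (Hbd : bound S). { exists b. intros y Hy. auto. }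
  destruct (completeness _ Hbd Hne) as [l [Hl1 Hl2]].
  exists l. split; auto.
Qed.

Lemma lim_or (u : nat -> R) : exists l, Un_cv u l \/ ~ (exists l', Un_cv u l').
Proof.
  destruct (classic (exists l', Un_cv u l')) as [[m H]|H].
  - exists m; auto.
  - exists 0; auto.
Qed.
Definition limR (u : nat -> R) : R := proj1_sig (constructive_indefinite_description _ (lim_or u)).
Lemma limR_spec u : (exists l, Un_cv u l) -> Un_cv u (limR u).
Proof.
  intro H. unfold limR. destruct (constructive_indefinite_description _ (lim_or u)) as [m [Hm|Hm]]; simpl; auto.
  contradiction.
Qed.


Lemma le_eps x y : (forall e, 0 < e -> x <= y + e) -> x <= y.
Proof.
  intro H. destruct (Rle_or_lt x y) as [h|h]; auto.
  specialize (H ((x - y)/2)). lra.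
Qed.

Definition infm {O} (A : (O -> Prop) -> Prop) (mu nu : (O -> Prop) -> R) (E : O -> Prop) : R :=
  glbR (fun v => exists F, A F /\ v = mu (sinter E F) + nu (sdiff E F)).

Definition good {O} (A : (O -> Prop) -> Prop) (mu : (O -> Prop) -> R) :=
  fin_additive A mu /\ nonnegf A mu.

Lemma infm_spec {O} (A : (O -> Prop) -> Prop) mu nu E : is_algebra A -> good A mu -> good A nu -> A E ->
  is_glb (fun v => exists F, A F /\ v = mu (sinter E F) + nu (sdiff E F)) (infm A mu nu E).
Proof.
  intros HA [Hm1 Hm2] [Hn1 Hn2] HE. apply glbR_spec. apply glb_exists with 0.
  - exists (mu (sinter E sfull) + nu (sdiff E sfull)). exists sfull; split; auto. apply A_full; auto.
  - intros x [F [HF ->]]. pose proof (Hm2 _ (A_inter A E F HA HE HF)). pose proof (Hn2 _ (A_diff A E F HA HE HF)). lra.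
Qed.

Lemma infm_le {O} (A : (O -> Prop) -> Prop) mu nu E F : is_algebra A -> good A mu -> good A nu -> A E -> A F ->
  infm A mu nu E <= mu (sinter E F) + nu (sdiff E F).
Proof. intros HA Hm Hn HE HF. apply (proj1 (infm_spec A mu nu E HA Hm Hn HE)). exists F; auto. Qed.

Lemma infm_ge0 {O} (A : (O -> Prop) -> Prop) mu nu E : is_algebra A -> good A mu -> good A nu -> A E ->
  0 <= infm A mu nu E.
Proof.
  intros HA Hm Hn HE. apply (proj2 (infm_spec A mu nu E HA Hm Hn HE)).
  intros x [F [HF ->]]. destruct Hm as [_ Hm]; destruct Hn as [_ Hn].
  pose proof (Hm _ (A_inter A E F HA HE HF)). pose proof (Hn _ (A_diff A E F HA HE HF)). lra.
Qed.

Lemma infm_approx {O} (A : (O -> Prop) -> Prop) mu nu E e : is_algebra A -> good A mu -> good A nu -> A E -> 0 < e ->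
  exists F, A F /\ mu (sinter E F) + nu (sdiff E F) < infm A mu nu E + e.
Proof.
  intros HA Hm Hn HE He. apply NNPP; intro Hc.
  assert (infm A mu nu E + e <= infm A mu nu E); [|lra].
  apply (proj2 (infm_spec A mu nu E HA Hm Hn HE)).
  intros x [F [HF ->]]. apply Rnot_lt_le. intro h. apply Hc. exists F; auto.
Qed.

Lemma infm_le_mu {O} (A : (O -> Prop) -> Prop) mu nu E : is_algebra A -> good A mu -> good A nu -> A E ->
  infm A mu nu E <= mu E.
Proof.
  intros HA Hm Hn HE. pose proof (infm_le A mu nu E sfull HA Hm Hn HE (A_full A HA)).
  replace (sinter E sfull) with E in H by (apply pe; intro; unfold sinter, sfull; tauto).
  replace (sdiff E sfull) with (@sempty O) in H by (apply pe; intro; unfold sdiff, sfull, sempty; tauto).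
  rewrite (add_empty A nu HA (proj1 Hn)) in H. lra.
Qed.

Lemma infm_le_nu {O} (A : (O -> Prop) -> Prop) mu nu E : is_algebra A -> good A mu -> good A nu -> A E ->
  infm A mu nu E <= nu E.
Proof.
  intros HA Hm Hn HE. pose proof (infm_le A mu nu E sempty HA Hm Hn HE (A_empty A HA)).
  replace (sdiff E sempty) with E in H by (apply pe; intro; unfold sdiff, sempty; tauto).
  replace (sinter E sempty) with (@sempty O) in H by (apply pe; intro; unfold sinter, sempty; tauto).
  rewrite (add_empty A mu HA (proj1 Hm)) in H. lra.
Qed.

Lemma infm_great {O} (A : (O -> Prop) -> Prop) mu nu tau E : is_algebra A -> good A mu -> good A nu -> A E ->
  fin_additive A tau -> (forall F, A F -> tau F <= mu F) -> (forall F, A F -> tau F <= nu F) ->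
  tau E <= infm A mu nu E.
Proof.
  intros HA Hm Hn HE Ht H1 H2. apply (proj2 (infm_spec A mu nu E HA Hm Hn HE)).
  intros x [F [HF ->]]. rewrite (add_split A tau E F HA Ht HE HF).
  pose proof (H1 _ (A_inter A E F HA HE HF)). pose proof (H2 _ (A_diff A E F HA HE HF)). lra.
Qed.

Lemma infm_add {O} (A : (O -> Prop) -> Prop) mu nu : is_algebra A -> good A mu -> good A nu ->
  fin_additive A (infm A mu nu).
Proof.
  intros HA Hm Hn E G HE HG Hd.
  change (fun x => E x \/ G x) with (sunion E G).
  assert (HEG : A (sunion E G)) by (apply A_union; auto).
  apply Rle_antisym.
  - apply le_eps; intros e He.
    destruct (infm_approx A mu nu E (e/2) HA Hm Hn HE) as [F1 [HF1 h1]]; [lra|].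
    destruct (infm_approx A mu nu G (e/2) HA Hm Hn HG) as [F2 [HF2 h2]]; [lra|].
    set (F := sunion (sinter E F1) (sinter G F2)).
    assert (HF : A F) by (apply A_union; auto; apply A_inter; auto).
    pose proof (infm_le A mu nu (sunion E G) F HA Hm Hn HEG HF).
    replace (sinter (sunion E G) F) with (sunion (sinter E F1) (sinter G F2)) in H.
    2:{ apply pe; intro x; unfold F, sunion, sinter; specialize (Hd x); tauto. }
    replace (sdiff (sunion E G) F) with (sunion (sdiff E F1) (sdiff G F2)) in H.
    2:{ apply pe; intro x; unfold F, sunion, sinter, sdiff; specialize (Hd x); tauto. }
    rewrite (add_union A mu _ _ (proj1 Hm) (A_inter A E F1 HA HE HF1) (A_inter A G F2 HA HG HF2)) in H.
    2:{ unfold sinter; intros x [h _] [h' _]; eauto. }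
    rewrite (add_union A nu _ _ (proj1 Hn) (A_diff A E F1 HA HE HF1) (A_diff A G F2 HA HG HF2)) in H.
    2:{ unfold sdiff; intros x [h _] [h' _]; eauto. }
    lra.
  - apply (proj2 (infm_spec A mu nu (sunion E G) HA Hm Hn HEG)).
    intros x [F [HF ->]].
    replace (sinter (sunion E G) F) with (sunion (sinter E F) (sinter G F)).
    2:{ apply pe; intro x; unfold sunion, sinter; tauto. }
    replace (sdiff (sunion E G) F) with (sunion (sdiff E F) (sdiff G F)).
    2:{ apply pe; intro x; unfold sunion, sdiff; tauto. }
    rewrite (add_union A mu _ _ (proj1 Hm) (A_inter A E F HA HE HF) (A_inter A G F HA HG HF)).
    2:{ unfold sinter; intros x [h _] [h' _]; eauto. }
    rewrite (add_union A nu _ _ (proj1 Hn) (A_diff A E F HA HE HF) (A_diff A G F HA HG HF)).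
    2:{ unfold sdiff; intros x [h _] [h' _]; eauto. }
    pose proof (infm_le A mu nu E F HA Hm Hn HE HF).
    pose proof (infm_le A mu nu G F HA Hm Hn HG HF). lra.
Qed.

Lemma infm_good {O} (A : (O -> Prop) -> Prop) mu nu : is_algebra A -> good A mu -> good A nu ->
  good A (infm A mu nu).
Proof. intros HA Hm Hn. split. apply infm_add; auto. intros F HF; apply infm_ge0; auto. Qed.

Lemma infm_concave {O} (A : (O -> Prop) -> Prop) a b nu E : is_algebra A -> good A a -> good A b -> good A nu -> A E ->
  good A (fun F => (a F + b F)/2) ->
  infm A a nu E + infm A b nu E <= 2 * infm A (fun F => (a F + b F)/2) nu E.
Proof.
  intros HA Ha Hb Hn HE Hc.
  assert ((infm A a nu E + infm A b nu E)/2 <= infm A (fun F => (a F + b F)/2) nu E); [|lra].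
  apply (proj2 (infm_spec A _ nu E HA Hc Hn HE)).
  intros x [F [HF ->]].
  pose proof (infm_le A a nu E F HA Ha Hn HE HF). pose proof (infm_le A b nu E F HA Hb Hn HE HF). lra.
Qed.

Lemma infm_mono {O} (A : (O -> Prop) -> Prop) mu nu mu' nu' E : is_algebra A -> good A mu -> good A nu ->
  good A mu' -> good A nu' -> A E ->
  (forall F, A F -> mu F <= mu' F) -> (forall F, A F -> nu F <= nu' F) ->
  infm A mu nu E <= infm A mu' nu' E.
Proof.
  intros HA Hm Hn Hm' Hn' HE H1 H2.
  apply (proj2 (infm_spec A mu' nu' E HA Hm' Hn' HE)).
  intros x [F [HF ->]].
  pose proof (infm_le A mu nu E F HA Hm Hn HE HF).
  pose proof (H1 _ (A_inter A E F HA HE HF)). pose proof (H2 _ (A_diff A E F HA HE HF)). lra.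
Qed.


Definition disj {O} (l : list (O -> Prop)) := forall i j, (i < length l)%nat -> (j < length l)%nat -> i <> j ->
     forall x, nth i l (fun _ => False) x -> nth j l (fun _ => False) x -> False.

Lemma disj_tail {O} (F : O -> Prop) l : disj (F :: l) -> disj l.
Proof.
  intros H i j Hi Hj Hij x h1 h2. apply (H (S i) (S j)) with x; simpl; try lia; auto.
Qed.

Lemma disj_head {O} (F : O -> Prop) l : disj (F :: l) -> forall G, In G l -> forall x, F x -> G x -> False.
Proof.
  intros H G HG x h1 h2. destruct (In_nth l G (fun _ => False) HG) as [j [Hj Hn]].
  apply (H 0%nat (S j)) with x; simpl; try lia; auto. rewrite Hn; auto.
Qed.

Lemma PN_lemma {O} (A : (O -> Prop) -> Prop) sigma : is_algebra A -> fin_additive A sigma ->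
  forall l, (forall F, In F l -> A F) -> disj l ->
  exists P N, A P /\ A N /\ (forall x, P x \/ N x <-> exists F, In F l /\ F x) /\
    (forall x, P x -> N x -> False) /\ sum_abs sigma l = sigma P - sigma N /\
    (forall F, In F l -> 0 <= sigma F -> forall x, F x -> P x).
Proof.
  intros HA Hs l. induction l as [|F l IH]; intros Hl Hd.
  - exists sempty, sempty. split; [apply A_empty; auto|]. split; [apply A_empty; auto|].
    split; [|split; [|split]].
    + intro x; split. intros [h|h]; destruct h. intros [F [h _]]; destruct h.
    + intros x h; destruct h.
    + simpl. rewrite (add_empty A sigma HA Hs). ring.
    + intros F h; destruct h.
  - assert (HF : A F) by (apply Hl; left; auto).
    destruct IH as [P [N [HP [HN [Hc [Hpn [Hsum Hpos]]]]]]].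
    { intros G hG; apply Hl; right; auto. }
    { apply disj_tail with F; auto. }
    assert (HdF : forall x, F x -> (P x \/ N x) -> False).
    { intros x hx hpn. apply Hc in hpn. destruct hpn as [G [hG hGx]]. eapply disj_head; eauto. }
    destruct (Rle_dec 0 (sigma F)) as [h0|h0].
    + exists (sunion F P), N. split; [|split; [|split; [|split; [|split]]]]; [| |split| | |].
      * apply A_union; auto.
      * auto.
      * intros [[h|h]|h]. exists F; split; [left|]; auto.
        destruct (proj1 (Hc x) (or_introl h)) as [G [hG hx]]. exists G; split; [right|]; auto.
        destruct (proj1 (Hc x) (or_intror h)) as [G [hG hx]]. exists G; split; [right|]; auto.
      * intros [G [[<-|hG] hx]]. left; left; auto.
        destruct (proj2 (Hc x) (ex_intro _ G (conj hG hx))) as [h|h]; [left; right|right]; auto.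
      * intros x [h|h] hn. eapply HdF; eauto. eapply Hpn; eauto.
      * simpl. fold (sum_abs sigma l). rewrite Hsum.
        rewrite (add_union A sigma F P Hs HF HP). rewrite Rabs_right by lra. ring.
        intros x h1 h2; eapply HdF; eauto.
      * intros G [<-|hG] hG0 x hx. left; auto. right; eapply Hpos; eauto.
    + exists P, (sunion F N). split; [|split; [|split; [|split; [|split]]]]; [| |split| | |].
      * auto.
      * apply A_union; auto.
      * intros [h|[h|h]].
        destruct (proj1 (Hc x) (or_introl h)) as [G [hG hx]]. exists G; split; [right|]; auto.
        exists F; split; [left|]; auto.
        destruct (proj1 (Hc x) (or_intror h)) as [G [hG hx]]. exists G; split; [right|]; auto.
      * intros [G [[<-|hG] hx]]. right; left; auto.
        destruct (proj2 (Hc x) (ex_intro _ G (conj hG hx))) as [h|h]; [left|right;right]; auto.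
      * intros x h [hn|hn]. eapply HdF; eauto. eapply Hpn; eauto.
      * simpl. fold (sum_abs sigma l). rewrite Hsum.
        rewrite (add_union A sigma F N Hs HF HN). rewrite Rabs_left by lra. ring.
        intros x h1 h2; eapply HdF; eauto.
      * intros G [<-|hG] hG0 x hx. lra. eapply Hpos; eauto.
Qed.

Lemma norm_from_D {O} (A : (O -> Prop) -> Prop) sigma c : is_algebra A -> fin_additive A sigma ->
  (forall F, A F -> sigma F - sigma (scompl F) <= c) -> norm_le A sigma c.
Proof.
  intros HA Hs HD l [Hl [Hd Hc]].
  destruct (PN_lemma A sigma HA Hs l Hl Hd) as [P [N [HP [HN [Hc' [Hpn [Hsum _]]]]]]].
  rewrite Hsum. replace N with (scompl P). apply HD; auto.
  apply pe; intro x. unfold scompl. split.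
  - intro h. assert (P x \/ N x). { apply Hc'. apply Hc. exact I. } tauto.
  - intros h h'. eapply Hpn; eauto.
Qed.

Lemma tv_le_good {O} (A : (O -> Prop) -> Prop) nu E : is_algebra A -> good A nu -> A E -> tv_le A nu E (nu E).
Proof.
  intros HA [Ha Hn] HE l [Hl [Hd Hc]].
  destruct (PN_lemma A nu HA Ha l Hl Hd) as [P [N [HP [HN [Hc' [Hpn [Hsum _]]]]]]].
  rewrite Hsum. pose proof (Hn N HN).
  assert (nu P <= nu E); [|lra].
  apply mono with A; auto. intros x hx. apply Hc. apply Hc'. auto.
Qed.

Lemma tv_le_single {O} (A : (O -> Prop) -> Prop) sigma E c : A E -> tv_le A sigma E c -> Rabs (sigma E) <= c.
Proof.
  intros HE H. specialize (H (E :: nil)).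
  simpl in H. rewrite Rplus_0_r in H. apply H.
  split; [|split].
  - intros F [<-|[]]; auto.
  - intros i j Hi Hj Hij. simpl in Hi, Hj. lia.
  - intro x; split. intro h; exists E; split; [left|]; auto. intros [F [[<-|[]] h]]; auto.
Qed.


Fixpoint sumk (f : nat -> R) (n : nat) : R := match n with 0%nat => 0 | S n => sumk f n + f n end.

Lemma sumk_ext f g n : (forall i, (i < n)%nat -> f i = g i) -> sumk f n = sumk g n.
Proof. induction n; simpl; intros H; auto. rewrite IHn, H; auto. Qed.
Lemma sumk_plus f g n : sumk (fun i => f i + g i) n = sumk f n + sumk g n.
Proof. induction n; simpl; auto. lra. rewrite IHn; ring. Qed.
Lemma sumk_minus f g n : sumk (fun i => f i - g i) n = sumk f n - sumk g n.
Proof. induction n; simpl; auto. lra. rewrite IHn; ring. Qed.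
Lemma sumk_scal c f n : sumk (fun i => c * f i) n = c * sumk f n.
Proof. induction n; simpl; auto. ring. rewrite IHn; ring. Qed.
Lemma sumk_le f g n : (forall i, (i < n)%nat -> f i <= g i) -> sumk f n <= sumk g n.
Proof. induction n; simpl; intros H. lra. pose proof (H n (Nat.lt_succ_diag_r n)). assert (sumk f n <= sumk g n) by (apply IHn; intros; apply H; lia). lra. Qed.
Lemma sumk_nonneg f n : (forall i, (i < n)%nat -> 0 <= f i) -> 0 <= sumk f n.
Proof. intro H. replace 0 with (sumk (fun _ => 0) n). apply sumk_le; auto. induction n; simpl; auto. rewrite IHn; try lra. intros; apply H; lia. Qed.
Lemma sumk_term f n i : (forall i, (i < n)%nat -> 0 <= f i) -> (i < n)%nat -> f i <= sumk f n.
Proof.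
  induction n; intros H Hi. lia. simpl.
  destruct (Nat.eq_dec i n) as [->|h].
  - pose proof (sumk_nonneg f n (fun j hj => H j ltac:(lia))). lra.
  - pose proof (IHn (fun j hj => H j ltac:(lia)) ltac:(lia)). pose proof (H n ltac:(lia)). lra.
Qed.
Lemma sumk_mono_n f n n' : (forall i, 0 <= f i) -> (n <= n')%nat -> sumk f n <= sumk f n'.
Proof. intros H Hn. induction Hn; simpl; auto. lra. pose proof (H m); lra. Qed.

Lemma floor_ex z s : 0 <= z -> 0 < s -> exists i : nat, INR i * s <= z < INR (S i) * s.
Proof.
  intros Hz Hs. destruct (INR_unbounded (z / s)) as [n Hn].
  assert (Hzn : z < INR n * s).
  { apply Rmult_lt_compat_r with (r := s) in Hn; auto. unfold Rdiv in Hn. rewrite Rmult_assoc, Rinv_l in Hn; lra. }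
  clear Hn. induction n.
  - simpl in Hzn; lra.
  - destruct (Rlt_dec z (INR n * s)) as [h|h]; auto. exists n; split; lra.
Qed.

Lemma min_conc x y t : 2 * Rmin x t + 2 * Rmin y t <= 4 * Rmin ((x + y) / 2) t.
Proof. unfold Rmin; repeat destruct Rle_dec; lra. Qed.

Lemma RI x y l d J N : 0 <= x -> 0 <= y -> 0 <= l -> 0 < d -> (J <= N)%nat ->
  Rmin x (INR J * d * l) + 2 * sumk (fun i => Rmin x (INR i * d * l) + Rmin y (INR i * d * l)) (S N)
  <= 2 * d * l + Rmin y (INR J * d * l) + 4 * sumk (fun i => Rmin ((x + y) / 2) (INR i * d * l)) (S N).
Proof.
  intros Hx Hy Hl Hd HJ.
  set (h := fun i => 4 * Rmin ((x + y) / 2) (INR i * d * l) - 2 * (Rmin x (INR i * d * l) + Rmin y (INR i * d * l))).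
  assert (Hh : forall i, (i < S N)%nat -> 0 <= h i).
  { intros i _. unfold h. pose proof (min_conc x y (INR i * d * l)). lra. }
  assert (Hs : sumk h (S N) = 4 * sumk (fun i => Rmin ((x + y) / 2) (INR i * d * l)) (S N)
     - 2 * sumk (fun i => Rmin x (INR i * d * l) + Rmin y (INR i * d * l)) (S N)).
  { unfold h. rewrite sumk_minus, !sumk_scal. reflexivity. }
  assert (Rmin x (INR J * d * l) - Rmin y (INR J * d * l) <= 2 * d * l + sumk h (S N)); [|lra].
  set (K := INR J * d * l). set (u := Rmin x K).
  destruct (Rle_dec (u - Rmin y K) (2 * d * l)) as [hc|hc].
  - pose proof (sumk_nonneg h (S N) Hh). lra.
  - assert (HK : 0 <= K). { unfold K. pose proof (pos_INR J). apply Rmult_le_pos; [apply Rmult_le_pos|]; lra. }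
    assert (Hyk : Rmin y K = y).
    { destruct (Rle_dec y K) as [hy|hy]. apply Rmin_left; auto. exfalso. apply hc.
      rewrite Rmin_right by lra. pose proof (Rmin_r x K) as Hu. fold u in Hu.
      assert (0 <= d * l) by (apply Rmult_le_pos; lra). lra. }
    rewrite Hyk in hc |- *.
    assert (Hux : u <= x) by (unfold u; apply Rmin_l).
    assert (HuK : u <= K) by (unfold u; apply Rmin_r).
    assert (Hlp : 0 < l).
    { destruct Hl as [Hl|Hl]; auto. exfalso. unfold K in HuK. rewrite <- Hl in HuK. nra. }
    set (m := (u + y) / 2).
    assert (Hu0 : 0 <= u) by (unfold u; apply Rmin_glb; lra). assert (Hm0 : 0 <= m) by (unfold m; lra). assert (Hdl : 0 < d * l) by (apply Rmult_lt_0_compat; auto).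
    destruct (floor_ex m (d * l) Hm0 Hdl) as [i [Hi1 Hi2]].
    rewrite S_INR in Hi2.
    assert (HiJ : (i <= J)%nat).
    { apply INR_le. assert (INR i * (d * l) <= INR J * (d * l)).
      { unfold K in HuK. assert (m <= u) by (unfold m; lra). rewrite <- Rmult_assoc. lra. }
      apply Rmult_le_reg_r with (d * l); auto. }
    assert (h i >= u - y - 2 * d * l).
    { unfold h. set (t := INR i * d * l).
      assert (Ht1 : t <= m) by (unfold t; rewrite Rmult_assoc; auto).
      assert (Ht2 : m - d * l < t) by (unfold t; rewrite Rmult_assoc; lra).
      assert (Rmin x t = t) by (unfold Rmin; destruct Rle_dec; unfold m in *; lra).
      assert (Rmin y t = y) by (unfold Rmin; destruct Rle_dec; unfold m in *; lra).
      rewrite H, H0. unfold Rmin; destruct Rle_dec; unfold m in *; lra. }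
    pose proof (sumk_term h (S N) i Hh ltac:(lia)). lra.
Qed.


Lemma sumk_shift f n : sumk f (S n) = f 0%nat + sumk (fun i => f (S i)) n.
Proof. induction n; simpl in *. ring. rewrite IHn. ring. Qed.

Lemma add_sumk {O} (A : (O -> Prop) -> Prop) (f : nat -> (O -> Prop) -> R) n :
  (forall i, fin_additive A (f i)) -> fin_additive A (fun E => sumk (fun i => f i E) n).
Proof.
  intros H F G HF HG Hd. rewrite <- sumk_plus. apply sumk_ext. intros i _. apply H; auto.
Qed.

Lemma good_scale {O} (A : (O -> Prop) -> Prop) c lam : 0 <= c -> good A lam -> good A (fun F => c * lam F).
Proof.
  intros Hc [H1 H2]. split. apply add_scale; auto. intros F HF. apply Rmult_le_pos; auto.
Qed.

Lemma good_mid {O} (A : (O -> Prop) -> Prop) a b : good A a -> good A b -> good A (fun F => (a F + b F)/2).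
Proof.
  intros [H1 H2] [H3 H4]. split.
  - intros F G HF HG Hd. rewrite (H1 F G), (H3 F G); auto. lra.
  - intros F HF. pose proof (H2 F HF); pose proof (H4 F HF). lra.
Qed.

Lemma Smin_super {O} (A : (O -> Prop) -> Prop) (w : nat -> R) (m1 m2 : nat -> (O -> Prop) -> R) n E F :
  is_algebra A -> (forall j, 0 <= w j) -> (forall j, good A (m1 j)) -> (forall j, good A (m2 j)) -> A E -> A F ->
  sumk (fun j => w j * Rmin (m1 j (sinter E F)) (m2 j (sinter E F))) n +
  sumk (fun j => w j * Rmin (m1 j (sdiff E F)) (m2 j (sdiff E F))) n <=
  sumk (fun j => w j * Rmin (m1 j E) (m2 j E)) n.
Proof.
  intros HA Hw H1 H2 HE HF. rewrite <- sumk_plus. apply sumk_le. intros j _.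
  rewrite <- Rmult_plus_distr_l. apply Rmult_le_compat_l; auto.
  rewrite (add_split A (m1 j) E F HA (proj1 (H1 j)) HE HF).
  rewrite (add_split A (m2 j) E F HA (proj1 (H2 j)) HE HF).
  unfold Rmin; repeat destruct Rle_dec; lra.
Qed.

Lemma refine {O} (A : (O -> Prop) -> Prop) (w : nat -> R) (m1 m2 : nat -> (O -> Prop) -> R) X :
  is_algebra A -> (forall j, 0 <= w j) -> (forall j, good A (m1 j)) -> (forall j, good A (m2 j)) ->
  fin_additive A X ->
  forall n (L : (O -> Prop) -> R),
  (forall E F, A E -> A F -> L E <= L (sinter E F) + L (sdiff E F)) ->
  (forall E, A E -> L E <= X E + sumk (fun j => w j * Rmin (m1 j E) (m2 j E)) n) ->
  forall E, A E -> L E <= X E + sumk (fun j => w j * infm A (m1 j) (m2 j) E) n.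
Proof.
  intros HA Hw H1 H2 HX n. induction n as [|n IH]; intros L HL Hb E HE.
  - simpl. specialize (Hb E HE). simpl in Hb. auto.
  - set (L' := fun E => L E - w n * infm A (m1 n) (m2 n) E).
    assert (HL' : forall E F, A E -> A F -> L' E <= L' (sinter E F) + L' (sdiff E F)).
    { intros E' F HE' HF. unfold L'.
      rewrite (add_split A (infm A (m1 n) (m2 n)) E' F HA (infm_add A _ _ HA (H1 n) (H2 n)) HE' HF).
      pose proof (HL E' F HE' HF). lra. }
    assert (Hb' : forall E, A E -> L' E <= X E + sumk (fun j => w j * Rmin (m1 j E) (m2 j E)) n).
    { intros E' HE'. unfold L'. apply le_eps; intros e He.
      destruct (infm_approx A (m1 n) (m2 n) E' (e / (w n + 1)) HA (H1 n) (H2 n) HE') as [F [HF hF]].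
      { apply Rdiv_lt_0_compat; auto. pose proof (Hw n); lra. }
      pose proof (HL E' F HE' HF) as hs.
      pose proof (Hb _ (A_inter A E' F HA HE' HF)) as b1. pose proof (Hb _ (A_diff A E' F HA HE' HF)) as b2.
      simpl in b1, b2.
      pose proof (Smin_super A w m1 m2 n E' F HA Hw H1 H2 HE' HF) as hsup.
      rewrite (add_split A X E' F HA HX HE' HF).
      assert (w n * Rmin (m1 n (sinter E' F)) (m2 n (sinter E' F)) + w n * Rmin (m1 n (sdiff E' F)) (m2 n (sdiff E' F))
         <= w n * (infm A (m1 n) (m2 n) E' + e / (w n + 1))).
      { rewrite <- Rmult_plus_distr_l. apply Rmult_le_compat_l; auto.
        pose proof (Rmin_l (m1 n (sinter E' F)) (m2 n (sinter E' F))).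
        pose proof (Rmin_r (m1 n (sdiff E' F)) (m2 n (sdiff E' F))). lra. }
      assert (w n * (e / (w n + 1)) <= e).
      { pose proof (Hw n). unfold Rdiv. rewrite <- Rmult_assoc.
        apply Rmult_le_reg_r with (w n + 1); [lra|]. rewrite Rmult_assoc, Rinv_l by lra. nra. }
      lra. }
    pose proof (IH L' HL' Hb' E HE). unfold L' in H. simpl. lra.
Qed.


Definition tlv {O} (lam : (O -> Prop) -> R) (t : R) : (O -> Prop) -> R := fun F => t * lam F.
Definition mid {O} (a b : (O -> Prop) -> R) : (O -> Prop) -> R := fun F => (a F + b F) / 2.
Definition SI {O} (A : (O -> Prop) -> Prop) (a lam : (O -> Prop) -> R) (d : R) (N : nat) (E : O -> Prop) : R :=
  sumk (fun i => infm A a (tlv lam (INR i * d)) E) (S N).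

Lemma mid_comm {O} (a b : (O -> Prop) -> R) : mid a b = mid b a.
Proof. unfold mid. apply functional_extensionality; intro F. f_equal. ring. Qed.

Lemma good_tl {O} (A : (O -> Prop) -> Prop) lam t : 0 <= t -> good A lam -> good A (tlv lam t).
Proof. intros; unfold tlv; apply good_scale; auto. Qed.


Lemma SI_add {O} (A : (O -> Prop) -> Prop) a lam d N : is_algebra A -> good A a -> good A lam -> 0 <= d ->
  fin_additive A (SI A a lam d N).
Proof.
  intros HA Ha Hl Hd. unfold SI.
  apply (add_sumk A (fun i => infm A a (tlv lam (INR i * d))) (S N)).
  intro i. apply infm_add; auto. apply good_tl; auto. pose proof (pos_INR i); nra.
Qed.

Lemma SL {O} (A : (O -> Prop) -> Prop) a b lam d J N E : is_algebra A -> good A a -> good A b -> good A lam ->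
  0 < d -> (J <= N)%nat -> A E ->
  infm A a (tlv lam (INR J * d)) E + 2 * (SI A a lam d N E + SI A b lam d N E)
  <= 2 * d * lam E + infm A b (tlv lam (INR J * d)) E + 4 * SI A (mid a b) lam d N E.
Proof.
  intros HA Ha Hb Hl Hd HJ HE.
  assert (Hc : good A (mid a b)) by (apply good_mid; auto).
  assert (Htd : forall i : nat, 0 <= INR i * d) by (intro i; pose proof (pos_INR i); nra).
  assert (Ht : forall i : nat, good A (tlv lam (INR i * d))) by (intros; apply good_tl; auto).
  set (w := fun j : nat => match j with 0%nat => 1 | S _ => 4 end).
  set (m1 := fun j : nat => match j with 0%nat => b | S _ => mid a b end).
  set (m2 := fun j : nat => match j with 0%nat => tlv lam (INR J * d) | S i => tlv lam (INR i * d) end).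
  set (X := fun F => 2 * d * lam F).
  set (L := fun E => infm A a (tlv lam (INR J * d)) E + 2 * (SI A a lam d N E + SI A b lam d N E)).
  assert (HSa := SI_add A a lam d N HA Ha Hl (Rlt_le _ _ Hd)).
  assert (HSb := SI_add A b lam d N HA Hb Hl (Rlt_le _ _ Hd)).
  assert (HIa := infm_add A a (tlv lam (INR J * d)) HA Ha (Ht J)).
  assert (HL : forall E F, A E -> A F -> L E <= L (sinter E F) + L (sdiff E F)).
  { intros E' F HE' HF. unfold L.
    rewrite (add_split A _ E' F HA HSa HE' HF), (add_split A _ E' F HA HSb HE' HF), (add_split A _ E' F HA HIa HE' HF).
    lra. }
  assert (Hw : forall j, 0 <= w j) by (intros [|j]; simpl; lra).
  assert (H1 : forall j, good A (m1 j)) by (intros [|j]; simpl; auto).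
  assert (H2 : forall j, good A (m2 j)) by (intros [|j]; simpl; auto).
  assert (HX : fin_additive A X) by (apply add_scale; exact (proj1 Hl)).
  assert (Hbase : forall E, A E -> L E <= X E + sumk (fun j => w j * Rmin (m1 j E) (m2 j E)) (S (S N))).
  { intros E' HE'. rewrite sumk_shift. simpl (w 0%nat). simpl (m1 0%nat). simpl (m2 0%nat).
    unfold L, X, SI.
    assert (E1 : sumk (fun i => w (S i) * Rmin (m1 (S i) E') (m2 (S i) E')) (S N) =
                 4 * sumk (fun i => Rmin ((a E' + b E') / 2) (INR i * d * lam E')) (S N)).
    { rewrite <- sumk_scal. apply sumk_ext. intros i _. reflexivity. }
    rewrite E1.
    assert (E2 : infm A a (tlv lam (INR J * d)) E' <= Rmin (a E') (INR J * d * lam E')).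
    { apply Rmin_glb. apply infm_le_mu; auto. apply (infm_le_nu A a (tlv lam (INR J * d))); auto. }
    assert (E3 : sumk (fun i => infm A a (tlv lam (INR i * d)) E') (S N) + sumk (fun i => infm A b (tlv lam (INR i * d)) E') (S N)
       <= sumk (fun i => Rmin (a E') (INR i * d * lam E') + Rmin (b E') (INR i * d * lam E')) (S N)).
    { rewrite <- sumk_plus. apply sumk_le. intros i _. apply Rplus_le_compat; apply Rmin_glb.
      apply infm_le_mu; auto. apply (infm_le_nu A a (tlv lam (INR i * d))); auto.
      apply infm_le_mu; auto. apply (infm_le_nu A b (tlv lam (INR i * d))); auto. }
    pose proof (RI (a E') (b E') (lam E') d J N (proj2 Ha E' HE') (proj2 Hb E' HE') (proj2 Hl E' HE') Hd HJ).
    change (tlv lam (INR J * d) E') with (INR J * d * lam E'). lra. }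
  pose proof (refine A w m1 m2 X HA Hw H1 H2 HX (S (S N)) L HL Hbase E HE) as R.
  rewrite sumk_shift in R. simpl (w 0%nat) in R. simpl (m1 0%nat) in R. simpl (m2 0%nat) in R.
  unfold L, X in R. unfold SI.
  replace (sumk (fun i => w (S i) * infm A (m1 (S i)) (m2 (S i)) E) (S N)) with
    (4 * sumk (fun i => infm A (mid a b) (tlv lam (INR i * d)) E) (S N)) in R.
  - unfold SI in R. lra.
  - rewrite <- sumk_scal. apply sumk_ext. intros; reflexivity.
Qed.

Definition gapr {O} (A : (O -> Prop) -> Prop) a b lam d N : R :=
  4 * SI A (mid a b) lam d N sfull - 2 * SI A a lam d N sfull - 2 * SI A b lam d N sfull.

Lemma dist_lemma {O} (A : (O -> Prop) -> Prop) a b lam d J N F : is_algebra A -> good A a -> good A b -> good A lam ->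
  0 < d -> (J <= N)%nat -> A F ->
  (infm A a (tlv lam (INR J * d)) F - infm A b (tlv lam (INR J * d)) F) -
  (infm A a (tlv lam (INR J * d)) (scompl F) - infm A b (tlv lam (INR J * d)) (scompl F))
  <= 2 * d * lam sfull + gapr A a b lam d N.
Proof.
  intros HA Ha Hb Hl Hd HJ HF.
  assert (HcF := A_compl A F HA HF).
  pose proof (SL A a b lam d J N F HA Ha Hb Hl Hd HJ HF).
  pose proof (SL A b a lam d J N (scompl F) HA Hb Ha Hl Hd HJ HcF).
  rewrite <- mid_comm in H0.
  unfold gapr.
  rewrite (add_compl A lam F HA (proj1 Hl) HF).
  assert (Hc : good A (mid a b)) by (apply good_mid; auto).
  rewrite (add_compl A _ F HA (SI_add A _ lam d N HA Hc Hl (Rlt_le _ _ Hd)) HF).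
  rewrite (add_compl A _ F HA (SI_add A a lam d N HA Ha Hl (Rlt_le _ _ Hd)) HF).
  rewrite (add_compl A _ F HA (SI_add A b lam d N HA Hb Hl (Rlt_le _ _ Hd)) HF).
  lra.
Qed.


Lemma sf_ext f g N : (forall i, (i <= N)%nat -> f i = g i) -> sum_f_R0 f N = sum_f_R0 g N.
Proof. induction N; simpl; intro H. apply H; lia. rewrite IHN, H; auto. Qed.
Lemma sf_plus f g N : sum_f_R0 (fun i => f i + g i) N = sum_f_R0 f N + sum_f_R0 g N.
Proof. induction N; simpl; auto. rewrite IHN; ring. Qed.
Lemma sf_scal c f N : sum_f_R0 (fun i => c * f i) N = c * sum_f_R0 f N.
Proof. induction N; simpl; auto. rewrite IHN; ring. Qed.
Lemma sf_le f g N : (forall i, (i <= N)%nat -> f i <= g i) -> sum_f_R0 f N <= sum_f_R0 g N.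
Proof. induction N; simpl; intro H. apply H; lia. pose proof (H (S N) (le_n _)). assert (sum_f_R0 f N <= sum_f_R0 g N) by (apply IHN; intros; apply H; lia). lra. Qed.
Lemma sf_pad f N k : sum_f_R0 (fun i => if Nat.leb i N then f i else 0) (N + k) = sum_f_R0 f N.
Proof.
  induction k.
  - rewrite Nat.add_0_r. apply sf_ext. intros i Hi. apply Nat.leb_le in Hi. rewrite Hi; auto.
  - rewrite Nat.add_succ_r.
    change (sum_f_R0 (fun i => if Nat.leb i N then f i else 0) (N + k) +
            (if Nat.leb (S (N + k)) N then f (S (N + k)) else 0) = sum_f_R0 f N).
    rewrite IHk. replace (Nat.leb (S (N + k)) N) with false. ring.
    symmetry. apply Nat.leb_gt. lia.
Qed.
Lemma sf_shift f N : sum_f_R0 f (S N) = f 0%nat + sum_f_R0 (fun i => f (S i)) N.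
Proof. induction N; simpl in *. ring. rewrite IHN. ring. Qed.

Lemma lim_le (u : nat -> R) l c : Un_cv u l -> (exists N, forall n, (N <= n)%nat -> u n <= c) -> l <= c.
Proof.
  intros H [N HN]. apply le_eps; intros e He. destruct (H e He) as [N' HN'].
  specialize (HN' (max N N') ltac:(lia)). specialize (HN (max N N') ltac:(lia)).
  unfold Rdist in HN'. apply Rabs_def2 in HN'. lra.
Qed.
Lemma lim_ge (u : nat -> R) l c : Un_cv u l -> (exists N, forall n, (N <= n)%nat -> c <= u n) -> c <= l.
Proof.
  intros H [N HN]. apply le_eps; intros e He. destruct (H e He) as [N' HN'].
  specialize (HN' (max N N') ltac:(lia)). specialize (HN (max N N') ltac:(lia)).
  unfold Rdist in HN'. apply Rabs_def2 in HN'. lra.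
Qed.

Lemma lam_good {O} (A : (O -> Prop) -> Prop) mu lam : is_algebra A -> (forall n, good A (mu n)) ->
  (forall E, A E -> infinite_sum (fun n => (/ 2) ^ (S n) * mu n E) (lam E)) -> good A lam.
Proof.
  intros HA Hmu Hlam. split.
  - intros F G HF HG Hd.
    assert (HFG : A (fun x => F x \/ G x)) by (apply (A_union A F G HA HF HG)).
    pose proof (Hlam _ HFG) as h1. pose proof (Hlam _ HF) as h2. pose proof (Hlam _ HG) as h3.
    change (Un_cv (sum_f_R0 (fun n => (/ 2) ^ (S n) * mu n (fun x => F x \/ G x))) (lam (fun x => F x \/ G x))) in h1.
    change (Un_cv (sum_f_R0 (fun n => (/ 2) ^ (S n) * mu n F)) (lam F)) in h2.
    change (Un_cv (sum_f_R0 (fun n => (/ 2) ^ (S n) * mu n G)) (lam G)) in h3.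
    pose proof (CV_plus _ _ _ _ h2 h3) as h4.
    apply UL_sequence with (1 := h1). eapply Un_cv_ext; [|exact h4].
    intro n. simpl. rewrite <- sf_plus. apply sf_ext. intros i _.
    rewrite (proj1 (Hmu i) F G HF HG Hd). ring.
  - intros F HF. pose proof (Hlam _ HF) as h.
    change (Un_cv (sum_f_R0 (fun n => (/ 2) ^ (S n) * mu n F)) (lam F)) in h.
    apply lim_ge with (1 := h). exists 0%nat. intros n _.
    replace 0 with (sum_f_R0 (fun _ => 0) n) by (induction n; simpl; auto; rewrite IHn; ring).
    apply sf_le. intros i _. apply Rmult_le_pos. apply pow_le. lra. apply (proj2 (Hmu i)); auto.
Qed.

Lemma gamma_self {O} (A : (O -> Prop) -> Prop) mu n : in_Gamma A mu n (mu n).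
Proof.
  exists 0%nat, (fun _ => 1). split; [intros; lra|]. split; simpl; auto.
  intros F _. rewrite Nat.add_0_r. ring.
Qed.

Lemma gamma_good {O} (A : (O -> Prop) -> Prop) mu M n m : is_algebra A -> (forall n, good A (mu n)) ->
  (forall n, mu n sfull <= M) -> in_Gamma A mu n m -> good A m /\ m sfull <= M.
Proof.
  intros HA Hmu HM [N [w [Hw [Hs Hm]]]]. split; [split|].
  - intros F G HF HG Hd. change (fun x => F x \/ G x) with (sunion F G). rewrite (Hm F HF), (Hm G HG), (Hm _ (A_union A F G HA HF HG)).
    rewrite <- sf_plus. apply sf_ext. intros i _. rewrite (add_union A (mu (n+i)%nat) F G (proj1 (Hmu (n+i)%nat)) HF HG Hd). ring.
  - intros F HF. rewrite (Hm F HF).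
    replace 0 with (sum_f_R0 (fun _ => 0) N) by (clear; induction N; simpl; auto; rewrite IHN; ring).
    apply sf_le. intros i _. apply Rmult_le_pos; auto. apply (proj2 (Hmu _)); auto.
  - rewrite (Hm _ (A_full A HA)). rewrite <- (Rmult_1_r M), <- Hs, <- sf_scal.
    apply sf_le. intros i _. rewrite Rmult_comm. apply Rmult_le_compat_r; auto.
Qed.

Lemma gamma_succ {O} (A : (O -> Prop) -> Prop) mu n m : in_Gamma A mu (S n) m -> in_Gamma A mu n m.
Proof.
  intros [N [w [Hw [Hs Hm]]]].
  exists (S N), (fun i => match i with 0%nat => 0 | S j => w j end). split; [|split].
  - intros [|i]; simpl; auto; lra.
  - rewrite sf_shift. simpl. rewrite <- Hs. ring_simplify. reflexivity.
  - intros F HF. rewrite (Hm F HF). rewrite sf_shift. simpl. rewrite Rmult_0_l, Rplus_0_l.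
    apply sf_ext. intros i _. replace (n + S i)%nat with (S n + i)%nat by lia. reflexivity.
Qed.

Lemma gamma_mono {O} (A : (O -> Prop) -> Prop) mu n n' m : (n <= n')%nat -> in_Gamma A mu n' m -> in_Gamma A mu n m.
Proof.
  intros H. induction H; auto. intro h. apply IHle. apply gamma_succ; auto.
Qed.

Lemma gamma_mid {O} (A : (O -> Prop) -> Prop) mu n a b : in_Gamma A mu n a -> in_Gamma A mu n b -> in_Gamma A mu n (mid a b).
Proof.
  intros [Na [wa [Hwa [Hsa Ha]]]] [Nb [wb [Hwb [Hsb Hb]]]].
  set (pa := fun i => if Nat.leb i Na then wa i else 0).
  set (pb := fun i => if Nat.leb i Nb then wb i else 0).
  exists (Na + Nb)%nat, (fun i => (pa i + pb i) / 2). split; [|split].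
  - intro i. unfold pa, pb. pose proof (Hwa i); pose proof (Hwb i). destruct (Nat.leb i Na), (Nat.leb i Nb); lra.
  - unfold Rdiv. rewrite (sf_ext _ (fun i => / 2 * (pa i + pb i))) by (intros; ring).
    rewrite sf_scal, sf_plus. unfold pa, pb.
    assert (Ea := sf_pad wa Na Nb). assert (Eb := sf_pad wb Nb Na). rewrite (Nat.add_comm Nb Na) in Eb.
    rewrite Ea, Eb, Hsa, Hsb. lra.
  - intros F HF. unfold mid. rewrite (Ha F HF), (Hb F HF).
    assert (Ea : sum_f_R0 (fun i => if Nat.leb i Na then wa i * mu (n + i)%nat F else 0) (Na + Nb) =
                 sum_f_R0 (fun i => wa i * mu (n + i)%nat F) Na) by exact (sf_pad (fun i => wa i * mu (n + i)%nat F) Na Nb).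
    assert (Eb : sum_f_R0 (fun i => if Nat.leb i Nb then wb i * mu (n + i)%nat F else 0) (Nb + Na) =
                 sum_f_R0 (fun i => wb i * mu (n + i)%nat F) Nb) by exact (sf_pad (fun i => wb i * mu (n + i)%nat F) Nb Na).
    rewrite (Nat.add_comm Nb Na) in Eb. rewrite <- Ea, <- Eb.
    rewrite <- sf_plus. unfold Rdiv. rewrite Rmult_comm, <- sf_scal. apply sf_ext. intros i _.
    unfold pa, pb. destruct (Nat.leb i Na), (Nat.leb i Nb); lra.
Qed.


Definition dr (r : nat) : R := / 2 ^ r.
Definition Nr (r : nat) : nat := (r * 2 ^ r)%nat.
Definition Phir {O} (A : (O -> Prop) -> Prop) lam r (m : (O -> Prop) -> R) : R := SI A m lam (dr r) (Nr r) sfull.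
Definition wr (r : nat) : R := / (INR (S (Nr r)) * 2 ^ r).
Definition Ppart {O} (A : (O -> Prop) -> Prop) lam Kk (m : (O -> Prop) -> R) : R :=
  sumk (fun r => wr r * Phir A lam r m) Kk.
Definition Phi {O} (A : (O -> Prop) -> Prop) lam (m : (O -> Prop) -> R) : R :=
  lubR (fun v => exists Kk, v = Ppart A lam Kk m).

Lemma dr_pos r : 0 < dr r.
Proof. unfold dr. apply Rinv_0_lt_compat, pow_lt; lra. Qed.
Lemma wr_pos r : 0 < wr r.
Proof. unfold wr. apply Rinv_0_lt_compat, Rmult_lt_0_compat. apply lt_0_INR; lia. apply pow_lt; lra. Qed.

Lemma sumk_const_le f n c : (forall i, (i < n)%nat -> f i <= c) -> sumk f n <= INR n * c.
Proof.
  induction n; intro H. simpl; lra. rewrite S_INR. cbn [sumk].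
  assert (sumk f n <= INR n * c) by (apply IHn; intros; apply H; lia). pose proof (H n ltac:(lia)). lra.
Qed.

Lemma geo n : sumk (fun r => / 2 ^ r) n = 2 - 2 / 2 ^ n.
Proof.
  induction n; simpl. field. rewrite IHn. field. apply pow_nonzero; lra.
Qed.

Lemma sumk_diff_le f g Kk Kk' : (forall r, 0 <= f r <= g r) -> (Kk <= Kk')%nat ->
  sumk f Kk' - sumk f Kk <= sumk g Kk' - sumk g Kk.
Proof.
  intros H HR. induction HR. lra. simpl. pose proof (H m). lra.
Qed.

Lemma pow2_gt n : INR n < 2 ^ n.
Proof.
  induction n. simpl; lra. rewrite S_INR. simpl.
  assert (1 <= 2 ^ n) by (apply pow_R1_Rle; lra). lra.
Qed.

Lemma Phir_bounds {O} (A : (O -> Prop) -> Prop) lam r m : is_algebra A -> good A lam -> good A m ->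
  0 <= Phir A lam r m <= INR (S (Nr r)) * m sfull.
Proof.
  intros HA Hl Hm. unfold Phir, SI. split.
  - apply sumk_nonneg. intros i _. apply infm_ge0; auto. apply good_tl; auto.
    pose proof (pos_INR i); pose proof (dr_pos r); nra. apply A_full; auto.
  - apply sumk_const_le. intros i _. apply infm_le_mu; auto. apply good_tl; auto.
    pose proof (pos_INR i); pose proof (dr_pos r); nra. apply A_full; auto.
Qed.

Lemma wPhir_bounds {O} (A : (O -> Prop) -> Prop) lam r m M : is_algebra A -> good A lam -> good A m -> m sfull <= M ->
  0 <= wr r * Phir A lam r m <= M * / 2 ^ r.
Proof.
  intros HA Hl Hm HM. pose proof (Phir_bounds A lam r m HA Hl Hm) as [h1 h2]. pose proof (wr_pos r).
  split. nra.
  assert (Hp : 0 < INR (S (Nr r))) by (apply lt_0_INR; lia).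
  assert (H2r : 0 < 2 ^ r) by (apply pow_lt; lra).
  assert (wr r * Phir A lam r m <= wr r * (INR (S (Nr r)) * M)).
  { apply Rmult_le_compat_l. lra. assert (INR (S (Nr r)) * m sfull <= INR (S (Nr r)) * M) by (apply Rmult_le_compat_l; lra). lra. }
  replace (wr r * (INR (S (Nr r)) * M)) with (M * / 2 ^ r) in H0; auto.
  unfold wr. field. split; lra.
Qed.

Lemma Ppart_bounds {O} (A : (O -> Prop) -> Prop) lam m M : is_algebra A -> good A lam -> good A m -> m sfull <= M ->
  (forall Kk, 0 <= Ppart A lam Kk m) /\ (forall Kk Kk', (Kk <= Kk')%nat -> Ppart A lam Kk m <= Ppart A lam Kk' m) /\
  (forall Kk Kk', Ppart A lam Kk' m <= Ppart A lam Kk m + 2 * M / 2 ^ Kk) /\ (forall Kk, Ppart A lam Kk m <= 2 * M).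
Proof.
  intros HA Hl Hm HM.
  assert (Hb := fun r => wPhir_bounds A lam r m M HA Hl Hm HM).
  assert (HM0 : 0 <= M).
  { pose proof (proj2 Hm sfull (A_full A HA)). lra. }
  assert (P0 : forall Kk, 0 <= Ppart A lam Kk m).
  { intro Kk. unfold Ppart. apply sumk_nonneg. intros; apply Hb. }
  assert (P1 : forall Kk Kk', (Kk <= Kk')%nat -> Ppart A lam Kk m <= Ppart A lam Kk' m).
  { intros Kk Kk' h. unfold Ppart. induction h. lra. simpl. pose proof (Hb m0). lra. }
  assert (P3 : forall Kk, Ppart A lam Kk m <= 2 * M).
  { intro Kk. unfold Ppart. apply Rle_trans with (sumk (fun r => M * / 2 ^ r) Kk).
    apply sumk_le; intros; apply Hb. rewrite sumk_scal, geo.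
    assert (0 <= 2 / 2 ^ Kk) by (unfold Rdiv; apply Rmult_le_pos; [lra|]; apply Rlt_le, Rinv_0_lt_compat, pow_lt; lra).
    nra. }
  split; [auto|split; [auto|split; [|auto]]].
  intros Kk Kk'. destruct (Compare_dec.le_lt_dec Kk Kk') as [h|h].
  - pose proof (sumk_diff_le (fun r => wr r * Phir A lam r m) (fun r => M * / 2 ^ r) Kk Kk' Hb h).
    unfold Ppart. rewrite !sumk_scal, !geo in H.
    assert (0 <= 2 / 2 ^ Kk') by (unfold Rdiv; apply Rmult_le_pos; [lra|]; apply Rlt_le, Rinv_0_lt_compat, pow_lt; lra).
    assert (M * (2 - 2 / 2 ^ Kk') - M * (2 - 2 / 2 ^ Kk) <= 2 * M / 2 ^ Kk).
    { unfold Rdiv in *. nra. }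
    lra.
  - pose proof (P1 Kk' Kk ltac:(lia)).
    assert (0 <= 2 * M / 2 ^ Kk) by (unfold Rdiv; apply Rmult_le_pos; [lra|]; apply Rlt_le, Rinv_0_lt_compat, pow_lt; lra).
    lra.
Qed.

Lemma Phi_spec {O} (A : (O -> Prop) -> Prop) lam m M : is_algebra A -> good A lam -> good A m -> m sfull <= M ->
  (forall Kk, Ppart A lam Kk m <= Phi A lam m <= Ppart A lam Kk m + 2 * M / 2 ^ Kk) /\ 0 <= Phi A lam m <= 2 * M.
Proof.
  intros HA Hl Hm HM. destruct (Ppart_bounds A lam m M HA Hl Hm HM) as [P0 [P1 [P2 P3]]].
  assert (Hs : is_lubR (fun v => exists Kk, v = Ppart A lam Kk m) (Phi A lam m)).
  { apply lubR_spec. apply lub_exists with (2 * M). exists (Ppart A lam 0 m); eauto.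
    intros x [Kk ->]; auto. }
  destruct Hs as [H1 H2].
  assert (forall Kk, Ppart A lam Kk m <= Phi A lam m) by (intro Kk; apply H1; eauto).
  split.
  - intro Kk. split; auto. apply H2. intros x [Kk' ->]. auto.
  - split. pose proof (H 0%nat); pose proof (P0 0%nat); lra. apply H2. intros x [Kk' ->]; auto.
Qed.

Lemma gapr_nonneg {O} (A : (O -> Prop) -> Prop) lam a b r : is_algebra A -> good A lam -> good A a -> good A b ->
  0 <= gapr A a b lam (dr r) (Nr r).
Proof.
  intros HA Hl Ha Hb. unfold gapr, SI.
  assert (0 <= sumk (fun i => 4 * infm A (mid a b) (tlv lam (INR i * dr r)) sfull - 2 * infm A a (tlv lam (INR i * dr r)) sfull
     - 2 * infm A b (tlv lam (INR i * dr r)) sfull) (S (Nr r))).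
  { apply sumk_nonneg. intros i _.
    pose proof (infm_concave A a b (tlv lam (INR i * dr r)) sfull HA Ha Hb) as h.
    assert (0 <= INR i * dr r) by (pose proof (pos_INR i); pose proof (dr_pos r); nra).
    specialize (h (good_tl A lam _ H Hl) (A_full A HA) (good_mid A a b Ha Hb)). change (fun F : O -> Prop => (a F + b F) / 2) with (mid a b) in h. lra. }
  rewrite !sumk_minus, !sumk_scal in H. lra.
Qed.

Lemma gap_Phi {O} (A : (O -> Prop) -> Prop) lam a b M r : is_algebra A -> good A lam -> good A a -> good A b ->
  a sfull <= M -> b sfull <= M ->
  wr r * gapr A a b lam (dr r) (Nr r) <= 4 * Phi A lam (mid a b) - 2 * Phi A lam a - 2 * Phi A lam b.
Proof.
  intros HA Hl Ha Hb HaM HbM.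
  assert (Hc : good A (mid a b)) by (apply good_mid; auto).
  assert (HcM : mid a b sfull <= M) by (unfold mid; lra).
  destruct (Phi_spec A lam a M HA Hl Ha HaM) as [Sa _].
  destruct (Phi_spec A lam b M HA Hl Hb HbM) as [Sb _].
  destruct (Phi_spec A lam _ M HA Hl Hc HcM) as [Sc _].
  assert (HM0 : 0 <= M) by (pose proof (proj2 Ha sfull (A_full A HA)); lra).
  assert (key : forall Kk, (r < Kk)%nat -> wr r * gapr A a b lam (dr r) (Nr r) <=
      4 * Phi A lam (mid a b) - 2 * Phi A lam a - 2 * Phi A lam b + 8 * M / 2 ^ Kk).
  { intros Kk hR. specialize (Sa Kk); specialize (Sb Kk); specialize (Sc Kk).
    assert (Hsum : 4 * Ppart A lam Kk (mid a b) - 2 * Ppart A lam Kk a - 2 * Ppart A lam Kk b =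
                   sumk (fun s => wr s * gapr A a b lam (dr s) (Nr s)) Kk).
    { unfold Ppart, gapr, Phir. rewrite <- !sumk_scal, <- !sumk_minus. apply sumk_ext. intros; ring. }
    pose proof (sumk_term (fun s => wr s * gapr A a b lam (dr s) (Nr s)) Kk r) as ht.
    assert (ht' : wr r * gapr A a b lam (dr r) (Nr r) <= sumk (fun s => wr s * gapr A a b lam (dr s) (Nr s)) Kk).
    { apply ht; auto. intros i _. apply Rmult_le_pos. apply Rlt_le, wr_pos. apply gapr_nonneg; auto. }
    unfold Rdiv in *. lra. }
  apply le_eps. intros e He.
  destruct (INR_unbounded (8 * M / e)) as [K0 HR0].
  set (Kk := max K0 (S r)).
  assert (HR : (r < Kk)%nat) by (unfold Kk; lia).
  specialize (key Kk HR).
  assert (8 * M / 2 ^ Kk <= e).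
  { assert (INR K0 <= INR Kk) by (apply le_INR; unfold Kk; lia).
    pose proof (pow2_gt Kk). assert (H2 : 0 < 2 ^ Kk) by (apply pow_lt; lra).
    apply Rmult_le_reg_r with (2 ^ Kk); auto. unfold Rdiv. rewrite Rmult_assoc, Rinv_l by lra.
    assert (8 * M < e * 2 ^ Kk).
    { assert (H3 : 8 * M / e * e < 2 ^ Kk * e) by (apply Rmult_lt_compat_r; lra).
      unfold Rdiv in H3. rewrite Rmult_assoc, Rinv_l in H3 by lra. lra. }
    lra. }
  lra.
Qed.


Definition Vn {O} (A : (O -> Prop) -> Prop) mu lam n : R :=
  lubR (fun v => exists m, in_Gamma A mu n m /\ v = Phi A lam m).

Lemma exists_g {O} (A : (O -> Prop) -> Prop) mu lam M : is_algebra A -> (forall n, good A (mu n)) ->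
  (forall n, mu n sfull <= M) -> good A lam ->
  exists g : nat -> (O -> Prop) -> R, (forall n, in_Gamma A mu n (g n)) /\
    (forall e, 0 < e -> exists N, forall n n', (N <= n)%nat -> (N <= n')%nat ->
       4 * Phi A lam (mid (g n) (g n')) - 2 * Phi A lam (g n) - 2 * Phi A lam (g n') <= e).
Proof.
  intros HA Hmu HM Hl.
  assert (HG : forall n m, in_Gamma A mu n m -> good A m /\ m sfull <= M)
    by (intros n m h; apply (gamma_good A mu M n m HA Hmu HM h)).
  assert (HPhi : forall n m, in_Gamma A mu n m -> 0 <= Phi A lam m <= 2 * M).
  { intros n m h. destruct (HG n m h). exact (proj2 (Phi_spec A lam m M HA Hl H H0)). }
  assert (HV : forall n, is_lubR (fun v => exists m, in_Gamma A mu n m /\ v = Phi A lam m) (Vn A mu lam n)).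
  { intro n. apply lubR_spec. apply lub_exists with (2 * M).
    exists (Phi A lam (mu n)); exists (mu n); split; auto; apply gamma_self.
    intros x [m [h ->]]. apply (HPhi n m h). }
  assert (HVge : forall n m, in_Gamma A mu n m -> Phi A lam m <= Vn A mu lam n).
  { intros n m h. apply (proj1 (HV n)). eauto. }
  assert (HV0 : forall n, 0 <= Vn A mu lam n).
  { intro n. pose proof (HVge n (mu n) (gamma_self A mu n)). pose proof (HPhi n (mu n) (gamma_self A mu n)). lra. }
  assert (HVmono : forall n n', (n <= n')%nat -> Vn A mu lam n' <= Vn A mu lam n).
  { intros n n' h. apply (proj2 (HV n')). intros x [m [hm ->]]. apply HVge. apply gamma_mono with n'; auto. }
  assert (Hex : forall n, exists m, in_Gamma A mu n m /\ Vn A mu lam n - / (INR n + 1) < Phi A lam m).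
  { intro n. apply NNPP; intro hc.
    assert (Vn A mu lam n <= Vn A mu lam n - / (INR n + 1)).
    { apply (proj2 (HV n)). intros x [m [hm ->]]. apply Rnot_lt_le. intro hlt. apply hc. eauto. }
    assert (0 < / (INR n + 1)) by (apply Rinv_0_lt_compat; pose proof (pos_INR n); lra). lra. }
  set (g := fun n => proj1_sig (constructive_indefinite_description _ (Hex n))).
  assert (Hg : forall n, in_Gamma A mu n (g n) /\ Vn A mu lam n - / (INR n + 1) < Phi A lam (g n)).
  { intro n. unfold g. destruct (constructive_indefinite_description _ (Hex n)) as [m hm]. exact hm. }
  exists g. split; [intro n; apply Hg|].
  intros e He.
  assert (HL : is_glb (fun v => exists n, v = Vn A mu lam n) (glbR (fun v => exists n, v = Vn A mu lam n))).
  { apply glbR_spec. apply glb_exists with 0. exists (Vn A mu lam 0); exists 0%nat; auto. intros x [n ->]; auto. }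
  set (L := glbR (fun v => exists n, v = Vn A mu lam n)) in HL.
  assert (HN1 : exists N1, Vn A mu lam N1 < L + e / 4).
  { apply NNPP; intro hc. assert (L + e / 4 <= L); [|lra].
    apply (proj2 HL). intros x [n ->]. apply Rnot_lt_le. intro h; apply hc; eauto. }
  destruct HN1 as [N1 HN1].
  destruct (INR_unbounded (8 / e)) as [N2 HN2].
  exists (max N1 N2). intros n n' hn hn'.
  assert (key : forall n n', (max N1 N2 <= n)%nat -> (max N1 N2 <= n')%nat -> (n <= n')%nat ->
     4 * Phi A lam (mid (g n) (g n')) - 2 * Phi A lam (g n) - 2 * Phi A lam (g n') <= e).
  { clear n n' hn hn'. intros n n' hn hn' hnn.
    destruct (Hg n) as [Gn Pn]. destruct (Hg n') as [Gn' Pn'].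
    assert (Hmid : in_Gamma A mu n (mid (g n) (g n'))).
    { apply gamma_mid; auto. apply gamma_mono with n'; auto. }
    pose proof (HVge n _ Hmid).
    assert (Vn A mu lam n <= Vn A mu lam N1) by (apply HVmono; lia).
    assert (L <= Vn A mu lam n') by (apply (proj1 HL); eauto).
    assert (Hinv : forall k, (N2 <= k)%nat -> / (INR k + 1) <= e / 8).
    { intros k hk. assert (INR N2 <= INR k) by (apply le_INR; auto).
      assert (8 / e < INR k + 1) by lra.
      assert (0 < INR k + 1) by (pose proof (pos_INR k); lra).
      apply Rmult_le_reg_r with ((INR k + 1) * (8 / e)).
      apply Rmult_lt_0_compat; auto. unfold Rdiv; apply Rmult_lt_0_compat; [lra|apply Rinv_0_lt_compat; lra].
      replace (/ (INR k + 1) * ((INR k + 1) * (8 / e))) with (8 / e) by (field; lra).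
      replace (e / 8 * ((INR k + 1) * (8 / e))) with (INR k + 1) by (field; lra). lra. }
    pose proof (Hinv n ltac:(lia)). pose proof (Hinv n' ltac:(lia)). lra. }
  destruct (Nat.le_ge_cases n n') as [h|h].
  - apply key; auto.
  - rewrite mid_comm. pose proof (key n' n hn' hn h). lra.
Qed.


Definition Dset {O} (A : (O -> Prop) -> Prop) (s : (O -> Prop) -> R) (c : R) : Prop :=
  forall F, A F -> s F - s (scompl F) <= c.

Lemma D_abs {O} (A : (O -> Prop) -> Prop) s c : is_algebra A -> fin_additive A s -> Dset A s c ->
  forall E, A E -> Rabs (s E) <= c.
Proof.
  intros HA Hs HD E HE.
  pose proof (HD _ (A_full A HA)) as h1. pose proof (HD _ (A_empty A HA)) as h2.
  replace (scompl (@sfull O)) with (@sempty O) in h1 by (apply pe; intro; unfold scompl, sfull, sempty; tauto).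
  replace (scompl (@sempty O)) with (@sfull O) in h2 by (apply pe; intro; unfold scompl, sfull, sempty; tauto).
  rewrite (add_empty A s HA Hs) in h1, h2.
  pose proof (HD E HE) as h3. pose proof (HD _ (A_compl A E HA HE)) as h4.
  replace (scompl (scompl E)) with E in h4 by (apply pe; intro; unfold scompl; tauto).
  pose proof (add_compl A s E HA Hs HE).
  apply Rabs_le. lra.
Qed.

Lemma INR_kr k r : INR (k * 2 ^ r) * dr r = INR k.
Proof.
  unfold dr. rewrite mult_INR, pow_INR. replace (INR 2) with 2 by (simpl; ring). field. apply pow_nonzero; lra.
Qed.

Lemma trunc_cauchy {O} (A : (O -> Prop) -> Prop) lam (g : nat -> (O -> Prop) -> R) M :
  is_algebra A -> good A lam -> (forall n, good A (g n)) -> (forall n, g n sfull <= M) ->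
  (forall e, 0 < e -> exists N, forall n n', (N <= n)%nat -> (N <= n')%nat ->
       4 * Phi A lam (mid (g n) (g n')) - 2 * Phi A lam (g n) - 2 * Phi A lam (g n') <= e) ->
  forall (k : nat) e, 0 < e -> exists N, forall n n', (N <= n)%nat -> (N <= n')%nat ->
    Dset A (fun F => infm A (g n) (tlv lam (INR k)) F - infm A (g n') (tlv lam (INR k)) F) e.
Proof.
  intros HA Hl Hg HgM Hgap k e He.
  assert (Hl0 : 0 <= lam sfull) by (apply (proj2 Hl); apply A_full; auto).
  destruct (INR_unbounded (4 * lam sfull / e)) as [r0 Hr0].
  set (r := max r0 k).
  assert (Hdr : 2 * dr r * lam sfull <= e / 2).
  { assert (INR r0 <= INR r) by (apply le_INR; unfold r; lia). pose proof (pow2_gt r).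
    assert (H2 : 0 < 2 ^ r) by (apply pow_lt; lra).
    assert (4 * lam sfull < e * 2 ^ r).
    { assert (h : 4 * lam sfull / e * e < 2 ^ r * e) by (apply Rmult_lt_compat_r; lra).
      unfold Rdiv in h. rewrite Rmult_assoc, Rinv_l in h by lra. lra. }
    unfold dr. apply Rmult_le_reg_r with (2 ^ r); auto.
    replace (2 * / 2 ^ r * lam sfull * 2 ^ r) with (2 * lam sfull) by (field; lra). lra. }
  destruct (Hgap (wr r * (e / 2))) as [N HN].
  { apply Rmult_lt_0_compat. apply wr_pos. lra. }
  exists N. intros n n' hn hn' F HF.
  pose proof (HN n n' hn hn') as hg.
  pose proof (gap_Phi A lam (g n) (g n') M r HA Hl (Hg n) (Hg n') (HgM n) (HgM n')) as hp.
  assert (Hgr : gapr A (g n) (g n') lam (dr r) (Nr r) <= e / 2).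
  { pose proof (wr_pos r). apply Rmult_le_reg_l with (wr r); auto. lra. }
  assert (HJ : (k * 2 ^ r <= Nr r)%nat) by (unfold Nr, r; apply Nat.mul_le_mono_r; lia).
  pose proof (dist_lemma A (g n) (g n') lam (dr r) (k * 2 ^ r) (Nr r) F HA (Hg n) (Hg n') Hl (dr_pos r) HJ HF) as hd.
  rewrite INR_kr in hd. lra.
Qed.


Lemma abs_le_inv x a : Rabs x <= a -> - a <= x <= a.
Proof. unfold Rabs; destruct Rcase_abs; intros; lra. Qed.

Definition ik {O} (A : (O -> Prop) -> Prop) lam (g : nat -> (O -> Prop) -> R) (k n : nat) : (O -> Prop) -> R :=
  infm A (g n) (tlv lam (INR k)).
Definition rho {O} (A : (O -> Prop) -> Prop) lam (g : nat -> (O -> Prop) -> R) (k : nat) (E : O -> Prop) : R :=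
  limR (fun n => ik A lam g k n E).

Lemma ik_good {O} (A : (O -> Prop) -> Prop) lam g k n : is_algebra A -> good A lam -> good A (g n) -> good A (ik A lam g k n).
Proof. intros HA Hl Hg. unfold ik. apply infm_good; auto. apply good_tl; auto. apply pos_INR. Qed.

Lemma rho_unif {O} (A : (O -> Prop) -> Prop) lam (g : nat -> (O -> Prop) -> R) :
  is_algebra A -> good A lam -> (forall n, good A (g n)) ->
  (forall (k : nat) e, 0 < e -> exists N, forall n n', (N <= n)%nat -> (N <= n')%nat ->
    Dset A (fun F => ik A lam g k n F - ik A lam g k n' F) e) ->
  forall k e, 0 < e -> exists N, forall n, (N <= n)%nat -> forall E, A E -> Rabs (rho A lam g k E - ik A lam g k n E) <= e.
Proof.
  intros HA Hl Hg HC k e He.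
  assert (Hadd : forall n n', fin_additive A (fun F => ik A lam g k n F - ik A lam g k n' F)).
  { intros n n'. apply add_minus; apply (ik_good A lam g k _ HA Hl (Hg _)). }
  destruct (HC k e He) as [N HN]. exists N. intros n hn E HE.
  assert (Hcv : Un_cv (fun n => ik A lam g k n E) (rho A lam g k E)).
  { apply limR_spec. assert (Hc : Cauchy_crit (fun n => ik A lam g k n E)).
    { intros eps Heps. destruct (HC k (eps / 2) ltac:(lra)) as [N' HN']. exists N'. intros a b ha hb.
      pose proof (D_abs A _ _ HA (Hadd a b) (HN' a b ha hb) E HE). unfold Rdist. lra. }
    destruct (R_complete _ Hc) as [l hl]. eauto. }
  assert (Hb : forall n', (N <= n')%nat -> Rabs (ik A lam g k n' E - ik A lam g k n E) <= e).
  { intros n' hn'. apply (D_abs A _ _ HA (Hadd n' n) (HN n' n hn' hn) E HE). }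
  apply Rabs_le. split.
  - assert (ik A lam g k n E - e <= rho A lam g k E); [|lra].
    apply lim_ge with (1 := Hcv). exists N. intros n' hn'. pose proof (Hb n' hn'). apply abs_le_inv in H. lra.
  - assert (rho A lam g k E <= ik A lam g k n E + e); [|lra].
    apply lim_le with (1 := Hcv). exists N. intros n' hn'. pose proof (Hb n' hn'). apply abs_le_inv in H. lra.
Qed.


Definition Hunif {O} (A : (O -> Prop) -> Prop) lam (g : nat -> (O -> Prop) -> R) : Prop :=
  forall k e, 0 < e -> exists N, forall n, (N <= n)%nat -> forall E, A E -> Rabs (rho A lam g k E - ik A lam g k n E) <= e.

Lemma ik_le {O} (A : (O -> Prop) -> Prop) lam g M k n E : is_algebra A -> good A lam -> good A (g n) -> g n sfull <= M -> A E ->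
  0 <= ik A lam g k n E /\ ik A lam g k n E <= g n E /\ ik A lam g k n E <= INR k * lam E /\ ik A lam g k n E <= M.
Proof.
  intros HA Hl Hg HM HE. unfold ik.
  assert (Ht : good A (tlv lam (INR k))) by (apply good_tl; auto; apply pos_INR).
  pose proof (infm_ge0 A _ _ E HA Hg Ht HE). pose proof (infm_le_mu A _ _ E HA Hg Ht HE).
  pose proof (infm_le_nu A _ _ E HA Hg Ht HE). unfold tlv in H1 at 2.
  pose proof (mono A (g n) sfull E HA (proj1 Hg) (proj2 Hg) (A_full A HA) HE (fun x _ => I)). repeat split; lra.
Qed.

Lemma rho_props {O} (A : (O -> Prop) -> Prop) lam (g : nat -> (O -> Prop) -> R) M k :
  is_algebra A -> good A lam -> (forall n, good A (g n)) -> (forall n, g n sfull <= M) -> Hunif A lam g ->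
  good A (rho A lam g k) /\
  (forall E, A E -> rho A lam g k E <= INR k * lam E /\ rho A lam g k E <= M /\ rho A lam g k E <= rho A lam g (S k) E) /\
  (forall e, 0 < e -> exists N, forall n, (N <= n)%nat -> Dset A (fun F => rho A lam g k F - ik A lam g k n F) e).
Proof.
  intros HA Hl Hg HM HU.
  assert (Hik := fun k n => ik_good A lam g k n HA Hl (Hg n)).
  split; [split|split].
  - intros F G HF HG Hd. change (fun x => F x \/ G x) with (sunion F G).
    assert (HFG := A_union A F G HA HF HG).
    assert (forall d, 0 < d -> Rabs (rho A lam g k (sunion F G) - (rho A lam g k F + rho A lam g k G)) <= d).
    { intros d Hd0. destruct (HU k (d / 3) ltac:(lra)) as [N HN].
      pose proof (HN N (le_n _) _ HFG) as h1. pose proof (HN N (le_n _) _ HF) as h2. pose proof (HN N (le_n _) _ HG) as h3.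
      rewrite (add_union A _ F G (proj1 (Hik k N)) HF HG Hd) in h1.
      apply abs_le_inv in h1, h2, h3. apply Rabs_le. lra. }
    apply Rle_antisym; apply le_eps; intros d Hd0; pose proof (H d Hd0) as h; apply abs_le_inv in h; lra.
  - intros F HF. apply le_eps. intros d Hd0. destruct (HU k d Hd0) as [N HN].
    pose proof (HN N (le_n _) F HF) as h. apply abs_le_inv in h.
    pose proof (ik_le A lam g M k N F HA Hl (Hg N) (HM N) HF). lra.
  - intros E HE. split; [|split]; apply le_eps; intros d Hd0.
    + destruct (HU k d Hd0) as [N HN]. pose proof (HN N (le_n _) E HE) as h. apply abs_le_inv in h.
      pose proof (ik_le A lam g M k N E HA Hl (Hg N) (HM N) HE). lra.
    + destruct (HU k d Hd0) as [N HN]. pose proof (HN N (le_n _) E HE) as h. apply abs_le_inv in h.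
      pose proof (ik_le A lam g M k N E HA Hl (Hg N) (HM N) HE). lra.
    + destruct (HU k (d/2) ltac:(lra)) as [N HN]. destruct (HU (S k) (d/2) ltac:(lra)) as [N' HN'].
      pose proof (HN (max N N') ltac:(lia) E HE) as h. apply abs_le_inv in h.
      pose proof (HN' (max N N') ltac:(lia) E HE) as h'. apply abs_le_inv in h'.
      assert (ik A lam g k (max N N') E <= ik A lam g (S k) (max N N') E).
      { unfold ik. apply infm_mono; auto; try (apply good_tl; auto; apply pos_INR).
        intros; lra. intros F HF. unfold tlv. rewrite S_INR. pose proof (proj2 Hl F HF). lra. }
      lra.
  - intros e He. destruct (HU k (e / 4) ltac:(lra)) as [N HN]. exists N. intros n hn F HF.
    assert (HcF := A_compl A F HA HF).
    pose proof (HN n hn F HF) as h1. pose proof (HN n hn _ HcF) as h2.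
    apply abs_le_inv in h1, h2. lra.
Qed.


Definition xi {O} (A : (O -> Prop) -> Prop) lam (g : nat -> (O -> Prop) -> R) (E : O -> Prop) : R :=
  limR (fun k => rho A lam g k E).

Lemma xi_props {O} (A : (O -> Prop) -> Prop) lam (g : nat -> (O -> Prop) -> R) M :
  is_algebra A -> good A lam -> (forall n, good A (g n)) -> (forall n, g n sfull <= M) -> Hunif A lam g ->
  (forall E, A E -> Un_cv (fun k => rho A lam g k E) (xi A lam g E)) /\
  (forall k j E, (k <= j)%nat -> A E -> rho A lam g k E <= rho A lam g j E) /\
  (forall k E, A E -> rho A lam g k E <= xi A lam g E) /\
  (forall E, A E -> xi A lam g E <= M) /\
  good A (xi A lam g).
Proof.
  intros HA Hl Hg HM HU.
  assert (HP := fun k => rho_props A lam g M k HA Hl Hg HM HU).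
  assert (Hmono : forall k j E, (k <= j)%nat -> A E -> rho A lam g k E <= rho A lam g j E).
  { intros k j E hkj HE. induction hkj. lra. destruct (HP m) as [_ [h _]]. pose proof (h E HE). lra. }
  assert (Hcv : forall E, A E -> Un_cv (fun k => rho A lam g k E) (xi A lam g E)).
  { intros E HE. apply limR_spec.
    destruct (growing_cv (fun k => rho A lam g k E)) as [l hl]; eauto.
    - intro n. destruct (HP n) as [_ [h _]]. apply (h E HE).
    - exists M. intros x [i ->]. destruct (HP i) as [_ [h _]]. apply (h E HE). }
  assert (Hle : forall k E, A E -> rho A lam g k E <= xi A lam g E).
  { intros k E HE. apply lim_ge with (1 := Hcv E HE). exists k. intros n hn. apply Hmono; auto. }
  split; [auto|split; [auto|split; [auto|split]]].
  - intros E HE. apply lim_le with (1 := Hcv E HE). exists 0%nat. intros n _. destruct (HP n) as [_ [h _]]. apply (h E HE).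
  - split.
    + intros F G HF HG Hd. change (fun x => F x \/ G x) with (sunion F G).
      assert (HFG := A_union A F G HA HF HG).
      assert (forall d, 0 < d -> Rabs (xi A lam g (sunion F G) - (xi A lam g F + xi A lam g G)) <= d).
      { intros d Hd0.
        destruct (Hcv _ HFG (d / 3) ltac:(lra)) as [N1 h1]. destruct (Hcv _ HF (d / 3) ltac:(lra)) as [N2 h2].
        destruct (Hcv _ HG (d / 3) ltac:(lra)) as [N3 h3].
        set (K := max N1 (max N2 N3)).
        specialize (h1 K ltac:(unfold K; lia)). specialize (h2 K ltac:(unfold K; lia)). specialize (h3 K ltac:(unfold K; lia)).
        unfold Rdist in h1, h2, h3. apply Rabs_def2 in h1, h2, h3.
        destruct (HP K) as [[HK _] _]. rewrite (add_union A _ F G HK HF HG Hd) in h1.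
        apply Rabs_le. lra. }
      apply Rle_antisym; apply le_eps; intros d Hd0; pose proof (H d Hd0) as h; apply abs_le_inv in h; lra.
    + intros F HF. pose proof (Hle 0%nat F HF). destruct (HP 0%nat) as [[_ h] _]. pose proof (h F HF). lra.
Qed.


Theorem mainTheorem13 (Omega : Type) (A : (Omega -> Prop) -> Prop)
  (HA : is_algebra A)
  (mu : nat -> (Omega -> Prop) -> R)
  (Hmu : forall n, is_ba_pos A (mu n))
  (Hbd : exists M, forall n, norm_le A (mu n) M)
  (lam : (Omega -> Prop) -> R)
  (Hlam : forall E, A E -> infinite_sum (fun n => (/ 2) ^ (S n) * mu n E) (lam E)) :
  exists (xi : (Omega -> Prop) -> R) (m : nat -> (Omega -> Prop) -> R),
    is_ba_ac_pos A lam xi /\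
    (forall n, in_Gamma A mu n (m n)) /\
    (forall k : nat, exists (rho : (Omega -> Prop) -> R) (rhon : nat -> (Omega -> Prop) -> R),
        is_inf A xi (scale_sf k lam) rho /\
        (forall n, is_inf A (m n) (scale_sf k lam) (rhon n)) /\
        (forall eps, 0 < eps -> exists N, forall n, (N <= n)%nat ->
            norm_le A (fun F => rho F - rhon n F) eps)) /\
    (forall E, A E -> forall eps, 0 < eps -> exists N, forall n, (N <= n)%nat ->
        xi E - eps < m n E).
Proof.
  destruct Hbd as [M HM0].
  assert (Hmu' : forall n, good A (mu n)).
  { intro n. destruct (Hmu n) as [[h1 _] h2]. split; auto. }
  assert (HM : forall n, mu n sfull <= M).
  { intro n. pose proof (tv_le_single A (mu n) sfull M (A_full A HA) (HM0 n)). pose proof (Rle_abs (mu n sfull)). lra. }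
  assert (Hl : good A lam) by (apply (lam_good A mu lam HA Hmu' Hlam)).
  destruct (exists_g A mu lam M HA Hmu' HM Hl) as [g [HgG Hgap]].
  assert (Hg : forall n, good A (g n)) by (intro n; apply (gamma_good A mu M n (g n) HA Hmu' HM (HgG n))).
  assert (HgM : forall n, g n sfull <= M) by (intro n; apply (gamma_good A mu M n (g n) HA Hmu' HM (HgG n))).
  assert (HC := trunc_cauchy A lam g M HA Hl Hg HgM Hgap).
  assert (HU : Hunif A lam g) by (exact (rho_unif A lam g HA Hl Hg HC)).
  destruct (xi_props A lam g M HA Hl Hg HgM HU) as [Hxcv [Hmono [Hle [HxM Hxg]]]].
  assert (HP := fun k => rho_props A lam g M k HA Hl Hg HgM HU).
  assert (Hxr : forall j E, A E -> xi A lam g E - rho A lam g j E <= xi A lam g sfull - rho A lam g j sfull).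
  { intros j E HE. destruct (HP j) as [Hrj _].
    assert (Ha : fin_additive A (fun F => xi A lam g F - rho A lam g j F))
      by (apply add_minus; [exact (proj1 Hxg)|exact (proj1 Hrj)]).
    assert (Hn : nonnegf A (fun F => xi A lam g F - rho A lam g j F))
      by (intros F HF; pose proof (Hle j F HF); lra).
    exact (mono A (fun F => xi A lam g F - rho A lam g j F) sfull E HA Ha Hn (A_full A HA) HE (fun x _ => I)). }
  assert (Htail : forall e, 0 < e -> exists j0, forall j, (j0 <= j)%nat -> xi A lam g sfull - rho A lam g j sfull < e).
  { intros e He. destruct (Hxcv sfull (A_full A HA) e He) as [N HN]. exists N. intros j hj.
    specialize (HN j hj). unfold Rdist in HN. apply Rabs_def2 in HN. lra. }
  exists (xi A lam g), g.
  split; [|split; [|split]].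
  -
    split.
    + split; [split|].
      * exact (proj1 Hxg).
      * exists M. intros F HF. pose proof (proj2 Hxg F HF). rewrite Rabs_right by lra. apply HxM; auto.
      * exact (proj2 Hxg).
    + intros e He. destruct (Htail (e / 2) ltac:(lra)) as [j Hj]. specialize (Hj j (le_n _)).
      assert (Hj1 : 0 < INR j + 1) by (pose proof (pos_INR j); lra).
      exists (e / (2 * (INR j + 1))). split.
      { apply Rdiv_lt_0_compat; lra. }
      intros E HE [c [Hc Htv]].
      pose proof (tv_le_single A lam E c HE Htv) as hlE. pose proof (Rle_abs (lam E)).
      pose proof (Hxr j E HE). destruct (HP j) as [_ [Hb _]]. destruct (Hb E HE) as [hk _].
      assert (INR j * lam E <= e / 2).
      { assert (INR j * lam E <= INR j * (e / (2 * (INR j + 1)))).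
        { apply Rmult_le_compat_l. apply pos_INR. lra. }
        assert (INR j * (e / (2 * (INR j + 1))) <= e / 2).
        { unfold Rdiv. rewrite Rinv_mult. apply Rmult_le_reg_r with (INR j + 1); auto.
          replace (INR j * (e * (/ 2 * / (INR j + 1))) * (INR j + 1)) with (INR j * (e / 2)) by (field; lra).
          pose proof (pos_INR j). nra. }
        lra. }
      exists (xi A lam g E). split. lra. apply tv_le_good; auto.
  - exact HgG.
  - intro k. exists (rho A lam g k), (fun n => ik A lam g k n).
    destruct (HP k) as [Hrk [Hbk HDk]].
    split; [|split].
    + split; [|split; [|split]].
      * split. exact (proj1 Hrk). exists M. intros F HF. pose proof (proj2 Hrk F HF).
        rewrite Rabs_right by lra. apply (Hbk F HF).
      * intros F HF. apply Hle; auto.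
      * intros F HF. unfold scale_sf. apply (Hbk F HF).
      * intros tau [Htadd _] Ht1 Ht2 E HE. apply le_eps. intros e0 He0. set (e := e0 / 4).
        assert (He : 0 < e) by (unfold e; lra).
        destruct (Htail e He) as [j0 Hj0]. set (j := max j0 k).
        destruct (HU j e He) as [Nj HNj]. destruct (HU k e He) as [Nk HNk].
        set (n := max Nj Nk).
        assert (Ht : good A (tlv lam (INR k))) by (apply good_tl; auto; apply pos_INR).
        destruct (infm_approx A (g n) (tlv lam (INR k)) E e HA (Hg n) Ht HE He) as [G [HG hG]].
        assert (HEG := A_inter A E G HA HE HG). assert (HEmG := A_diff A E G HA HE HG).
        rewrite (add_split A tau E G HA Htadd HE HG).
        pose proof (Ht1 _ HEG). pose proof (Ht2 _ HEmG). unfold scale_sf in H0.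
        pose proof (Hxr j _ HEG). pose proof (Hj0 j ltac:(unfold j; lia)).
        pose proof (HNj n ltac:(unfold n; lia) _ HEG) as h1. apply abs_le_inv in h1.
        pose proof (HNk n ltac:(unfold n; lia) _ HE) as h2. apply abs_le_inv in h2.
        destruct (ik_le A lam g M j n _ HA Hl (Hg n) (HgM n) HEG) as [_ [h3 _]].
        unfold ik in h2. change (tlv lam (INR k) (sdiff E G)) with (INR k * lam (sdiff E G)) in hG. unfold e in *. lra.
    + intro n. split; [|split; [|split]].
      * split. exact (proj1 (ik_good A lam g k n HA Hl (Hg n))). exists M. intros F HF.
        destruct (ik_le A lam g M k n F HA Hl (Hg n) (HgM n) HF) as [h0 [_ [_ h]]].
        rewrite Rabs_right by lra. auto.
      * intros F HF. apply (ik_le A lam g M k n F HA Hl (Hg n) (HgM n) HF).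
      * intros F HF. unfold scale_sf. apply (ik_le A lam g M k n F HA Hl (Hg n) (HgM n) HF).
      * intros tau [Htadd _] Ht1 Ht2 E HE. unfold ik. apply infm_great; auto.
        apply good_tl; auto; apply pos_INR.
    + intros e He. destruct (HDk e He) as [N HN]. exists N. intros n hn.
      apply norm_from_D; [exact HA | apply add_minus; [exact (proj1 Hrk) | exact (proj1 (ik_good A lam g k n HA Hl (Hg n)))] | exact (HN n hn)].
  - intros E HE e He.
    destruct (Hxcv E HE (e / 2) ltac:(lra)) as [j Hj]. specialize (Hj j (le_n _)). unfold Rdist in Hj. apply Rabs_def2 in Hj.
    destruct (HU j (e / 4) ltac:(lra)) as [N HN]. exists N. intros n hn.
    pose proof (HN n hn E HE) as h. apply abs_le_inv in h.
    destruct (ik_le A lam g M j n E HA Hl (Hg n) (HgM n) HE) as [_ [h3 _]]. lra.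
Qed.
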